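(* Let $\varepsilon\neq0$, $\varepsilon'$ be real constants and consider the almost-Riemannian structure on $\mathbb{R}^2$ with orthonormal frame $F_1=(\varepsilon z+\frac{y^2}{2}+\varepsilon' y^3)\frac{\partial}{\partial z}$, $F_2=\frac{\partial}{\partial y}$, with Hamiltonian $H=\frac12\big(p_z^2(\varepsilon z+\frac{y^2}{2}+\varepsilon' y^3)^2+p_y^2\big)$. The normal extremals with initial condition $(y,z,p_y,p_z)|_{t=0}=(0,0,\pm1,\lambda)$, as $|\lambda|\to+\infty$, admit the expansions $$y(t)=\eta Y^0(t/\eta)+\eta^2 Y^1(t/\eta)+o(\eta^2),\qquad z(t)=\eta^3Z^0(t/\eta)+\eta^4Z^1(t/\eta)+o(\eta^4),$$ where $\eta=1/\sqrt{|\lambda|}$, $(Y^0,Z^0,P_Y^0,P_Z^0)$ solves (dots denote derivatives with respect to $s=t/\eta$) $$\dot Y^0=P_Y^0,\quad \dot P_Y^0=-\tfrac12(P_Z^0)^2(Y^0)^3,\quad \dot Z^0=\tfrac14P_Z^0(Y^0)^4,\quad \dot P_Z^0=0,$$ with initial condition $(0,0,\pm1,\mathrm{sign}(\lambda))$, and $(Y^1,Z^1,P_Y^1,P_Z^1)$ solves $$\dot Y^1=P_Y^1,\qquad \dot Z^1=\tfrac14P_Z^1(Y^0)^4+P_Z^0\big((Y^0)^3Y^1+\varepsilon Z^0(Y^0)^2+\varepsilon'(Y^0)^5\big),$$ $$\dot P_Y^1=-P_Z^0P_Z^1(Y^0)^3-(P_Z^0)^2\big(\tfrac32(Y^0)^2Y^1+\varepsilon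 Z^0Y^0+\tfrac52\varepsilon'(Y^0)^4\big),\qquad \dot P_Z^1=-\tfrac12(P_Z^0)^2\varepsilon(Y^0)^2,$$ with initial condition $(0,0,0,0)$. In particular, for $P_Y^0(0)=\pm1$, $P_Z^0\equiv\pm1$: $Y^0(s)=-P_Y^0(0)\sqrt2\,\mathrm{cn}(K+s)$ and $Z^0(s)=\frac{P_Z^0}{3}\big(s+2\,\mathrm{sn}(K+s)\mathrm{cn}(K+s)\mathrm{dn}(K+s)\big)$.
   Context: $K=\int_0^{\pi/2}\frac{d\varphi}{\sqrt{1-\frac12\sin^2\varphi}}$ and $\mathrm{sn},\mathrm{cn},\mathrm{dn}$ are Jacobi elliptic functions of modulus $1/\sqrt2$. Normal extremals are solutions of the Hamiltonian system $\dot y=\partial H/\partial p_y$, $\dot z=\partial H/\partial p_z$, $\dot p_y=-\partial H/\partial y$, $\dot p_z=-\partial H/\partial z$. *)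

(* Defs.v *)
From Stdlib Require Import Reals Lra ClassicalEpsilon.
Open Scope R_scope.

(** Total Riemann integral: the value of [RiemannInt pr] for any proof of
    integrability (the value does not depend on the proof); arbitrary otherwise. *)
Definition Rint (f : R -> R) (a b : R) : R :=
  epsilon (inhabits 0) (fun I => exists pr : Riemann_integrable f a b, RiemannInt pr = I).

(** Incomplete elliptic integral of the first kind with modulus k = 1/sqrt 2,
    F(phi) = int_0^phi dtheta / sqrt(1 - 1/2 sin^2 theta). *)
Definition Fell (phi : R) : R :=
  Rint (fun th => / sqrt (1 - / 2 * (sin th) ^ 2)) 0 phi.

Definition K : R := Fell (PI / 2).

Definition am (u : R) : R := epsilon (inhabits 0) (fun phi => Fell phi = u).

Definition sn (u : R) : R := sin (am u).
Definition cn (u : R) : R := cos (am u).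
Definition dn (u : R) : R := sqrt (1 - / 2 * (sn u) ^ 2).

Definition Ham (eps eps' y z py pz : R) : R :=
  / 2 * (pz ^ 2 * (eps * z + y ^ 2 / 2 + eps' * y ^ 3) ^ 2 + py ^ 2).

(** Normal extremal: solution (on all of R) of the Hamiltonian system
    y' = dH/dp_y, z' = dH/dp_z, p_y' = - dH/dy, p_z' = - dH/dz,
    the partial derivatives being taken at the current point. *)
Definition normal_extremal (eps eps' : R) (y z py pz : R -> R) : Prop :=
  forall t, exists a b c d : R,
    derivable_pt_lim y t a /\
    derivable_pt_lim (fun q => Ham eps eps' (y t) (z t) q (pz t)) (py t) a /\
    derivable_pt_lim z t b /\
    derivable_pt_lim (fun q => Ham eps eps' (y t) (z t) (py t) q) (pz t) b /\
    derivable_pt_lim py t c /\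
    derivable_pt_lim (fun q => Ham eps eps' q (z t) (py t) (pz t)) (y t) (- c) /\
    derivable_pt_lim pz t d /\
    derivable_pt_lim (fun q => Ham eps eps' (y t) q (py t) (pz t)) (z t) (- d).

Definition order0_system (Y0 Z0 PY0 PZ0 : R -> R) : Prop :=
  forall s,
    derivable_pt_lim Y0 s (PY0 s) /\
    derivable_pt_lim PY0 s (- / 2 * (PZ0 s) ^ 2 * (Y0 s) ^ 3) /\
    derivable_pt_lim Z0 s (/ 4 * PZ0 s * (Y0 s) ^ 4) /\
    derivable_pt_lim PZ0 s 0.

Definition order1_system (eps eps' : R) (Y0 Z0 PY0 PZ0 Y1 Z1 PY1 PZ1 : R -> R) : Prop :=
  forall s,
    derivable_pt_lim Y1 s (PY1 s) /\
    derivable_pt_lim Z1 s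
      (/ 4 * PZ1 s * (Y0 s) ^ 4
       + PZ0 s * ((Y0 s) ^ 3 * Y1 s + eps * Z0 s * (Y0 s) ^ 2 + eps' * (Y0 s) ^ 5)) /\
    derivable_pt_lim PY1 s
      (- PZ0 s * PZ1 s * (Y0 s) ^ 3
       - (PZ0 s) ^ 2 * (3 / 2 * (Y0 s) ^ 2 * Y1 s + eps * Z0 s * Y0 s
                        + 5 / 2 * eps' * (Y0 s) ^ 4)) /\
    derivable_pt_lim PZ1 s (- / 2 * (PZ0 s) ^ 2 * eps * (Y0 s) ^ 2).

(* Main.v *)
Require Import Defs.
From Stdlib Require Import Reals Lra Lia Psatz ClassicalEpsilon Classical.
Open Scope R_scope.

Lemma D_const c x : derivable_pt_lim (fun _ => c) x 0.
Proof. apply (derivable_pt_lim_const c x). Qed.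
Lemma D_id x : derivable_pt_lim (fun t => t) x 1.
Proof. apply (derivable_pt_lim_id x). Qed.
Lemma D_plus f g x a b : derivable_pt_lim f x a -> derivable_pt_lim g x b ->
  derivable_pt_lim (fun t => f t + g t) x (a+b).
Proof. intros; exact (derivable_pt_lim_plus f g x a b H H0). Qed.
Lemma D_minus f g x a b : derivable_pt_lim f x a -> derivable_pt_lim g x b ->
  derivable_pt_lim (fun t => f t - g t) x (a-b).
Proof. intros; exact (derivable_pt_lim_minus f g x a b H H0). Qed.
Lemma D_opp f x a : derivable_pt_lim f x a -> derivable_pt_lim (fun t => - f t) x (- a).
Proof. intros; exact (derivable_pt_lim_opp f x a H). Qed.
Lemma D_mult f g x a b : derivable_pt_lim f x a -> derivable_pt_lim g x b ->
  derivable_pt_lim (fun t => f t * g t) x (a * g x + f x * b).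
Proof. intros; exact (derivable_pt_lim_mult f g x a b H H0). Qed.
Lemma D_comp f g x a b : derivable_pt_lim g x a -> derivable_pt_lim f (g x) b ->
  derivable_pt_lim (fun t => f (g t)) x (b * a).
Proof. intros; exact (derivable_pt_lim_comp g f x a b H H0). Qed.
Lemma D_pow f x a n : derivable_pt_lim f x a ->
  derivable_pt_lim (fun t => f t ^ n) x (INR n * f x ^ pred n * a).
Proof. intros. apply (D_comp (fun y => y ^ n) f x a). auto. apply derivable_pt_lim_pow. Qed.
Lemma D_sin f x a : derivable_pt_lim f x a -> derivable_pt_lim (fun t => sin (f t)) x (cos (f x) * a).
Proof. intros. apply (D_comp sin f x a). auto. apply derivable_pt_lim_sin. Qed.
Lemma D_cos f x a : derivable_pt_lim f x a -> derivable_pt_lim (fun t => cos (f t)) x (- sin (f x) * a).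
Proof. intros. apply (D_comp cos f x a). auto. apply derivable_pt_lim_cos. Qed.
Lemma D_exp f x a : derivable_pt_lim f x a -> derivable_pt_lim (fun t => exp (f t)) x (exp (f x) * a).
Proof. intros. apply (D_comp exp f x a). auto. apply derivable_pt_lim_exp. Qed.
Lemma D_sqrt f x a : 0 < f x -> derivable_pt_lim f x a ->
  derivable_pt_lim (fun t => sqrt (f t)) x (/ (2 * sqrt (f x)) * a).
Proof. intros. apply (D_comp sqrt f x a). auto. apply derivable_pt_lim_sqrt; auto. Qed.
Lemma D_eq f x a b : derivable_pt_lim f x a -> a = b -> derivable_pt_lim f x b.
Proof. intros; subst; auto. Qed.

Lemma D_scale f c x a : derivable_pt_lim f (c * x) a -> derivable_pt_lim (fun t => f (c * t)) x (a * c).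
Proof. intros. apply (D_comp f (fun t => c * t) x c a). eapply D_eq. apply D_mult. apply D_const. apply D_id. cbv beta; ring. auto. Qed.

Ltac dhyp := match goal with |- derivable_pt_lim ?f _ _ =>
  match goal with H : forall s:R, derivable_pt_lim f s _ |- _ => apply H end end.
Ltac dtac := repeat (first [ apply D_id | apply D_const | eassumption | dhyp | eapply D_scale | eapply D_plus | eapply D_minus
  | eapply D_opp | eapply D_mult | eapply D_pow | eapply D_sin | eapply D_cos | eapply D_exp ]).

Lemma b_add a b A B : Rabs a <= A -> Rabs b <= B -> Rabs (a+b) <= A+B.
Proof. intros; eapply Rle_trans; [apply Rabs_triang|lra]. Qed.
Lemma b_sub a b A B : Rabs a <= A -> Rabs b <= B -> Rabs (a-b) <= A+B.
Proof. intros; eapply Rle_trans; [apply Rabs_triang|rewrite Rabs_Ropp; lra]. Qed.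
Lemma b_mul a b A B : Rabs a <= A -> Rabs b <= B -> Rabs (a*b) <= A*B.
Proof. intros; rewrite Rabs_mult; apply Rmult_le_compat; auto; apply Rabs_pos. Qed.
Lemma b_opp a A : Rabs a <= A -> Rabs (-a) <= A.
Proof. intros; rewrite Rabs_Ropp; auto. Qed.
Lemma b_pow a A n : Rabs a <= A -> Rabs (a^n) <= A^n.
Proof. intros; rewrite <- RPow_abs; apply pow_incr; split; auto; apply Rabs_pos. Qed.
Lemma b_refl a : Rabs a <= Rabs a.
Proof. lra. Qed.
Ltac bnd := repeat (first [eassumption | eapply b_add | eapply b_sub | eapply b_mul | eapply b_opp
   | eapply b_pow | apply b_refl]).

Lemma gronwall (E E' : R -> R) a b S : 0 < a -> 0 <= b -> 0 <= S ->
  (forall s, derivable_pt_lim E s (E' s)) ->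
  (forall s, 0 <= s <= S -> E' s <= a * E s + b) ->
  E S <= (E 0 + b/a) * exp (a*S).
Proof.
  intros Ha Hb HS HD HI.
  set (h := fun s => (E s + b/a) * exp (- a * s)).
  assert (Hh : forall s, derivable_pt_lim h s ((E' s - a * E s - b) * exp (- a * s))).
  { intro s. unfold h. eapply D_eq. eapply D_mult. eapply D_plus. apply HD. apply D_const.
    eapply D_exp. eapply D_mult. apply D_const. apply D_id.
    cbv beta. field. lra. }
  assert (h S <= h 0).
  { destruct HS as [HS|HS].
    - destruct (MVT_cor2 h _ 0 S HS (fun c _ => Hh c)) as [c [Hc1 Hc2]].
      assert ((E' c - a * E c - b) * exp (- a * c) <= 0).
      { assert (0 < exp (- a * c)) by apply exp_pos. specialize (HI c ltac:(lra)). nra. }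
      nra.
    - subst; lra. }
  unfold h in H. rewrite Rmult_0_r, exp_0, Rmult_1_r in H.
  assert (0 < exp (a * S)) by apply exp_pos.
  assert (exp (-a*S) * exp (a*S) = 1).
  { rewrite <- exp_plus. replace (-a*S + a*S) with 0 by ring. apply exp_0. }
  assert (0 <= b/a) by (unfold Rdiv; apply Rmult_le_pos; [lra| left; apply Rinv_0_lt_compat; lra]).
  apply Rmult_le_compat_r with (r := exp (a*S)) in H; [|lra].
  rewrite Rmult_assoc, H1, Rmult_1_r in H. nra.
Qed.

Lemma cont_eps f x : continuity_pt f x -> forall e, 0 < e ->
  exists d, 0 < d /\ forall u, Rabs (u - x) < d -> Rabs (f u - f x) < e.
Proof.
  intros Hc e He. destruct (Hc e He) as [d [Hd Hd2]]. exists d. split; auto.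
  intros u Hu. destruct (Req_dec u x). subst. unfold Rminus; rewrite Rplus_opp_r, Rabs_R0; auto.
  apply Hd2. split. split. exact I. auto. exact Hu.
Qed.

Lemma bootstrap (E : R -> R) S c : continuity E -> 0 <= S -> E 0 < c ->
  (forall t, 0 <= t <= S -> (forall u, 0 <= u <= t -> E u <= c) -> E t < c) ->
  forall t, 0 <= t <= S -> E t < c.
Proof.
  intros HC HS H0 HB t0 Ht0.
  apply NNPP; intro Hn. apply Rnot_lt_le in Hn.
  set (A := fun t => 0 <= t /\ forall u, 0 <= u <= t -> E u < c).
  assert (HA0 : A 0). { split. lra. intros u Hu. replace u with 0 by lra. auto. }
  assert (Hub : bound A).
  { exists t0. intros t [Ht1 Ht2]. destruct (Rle_dec t t0) as [|Hl]; auto.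
    specialize (Ht2 t0 ltac:(lra)). lra. }
  destruct (completeness A Hub (ex_intro _ 0 HA0)) as [T [HT1 HT2]].
  assert (HT0 : 0 <= T) by (apply HT1; auto).
  assert (HTt : T <= t0).
  { apply HT2. intros t [Ht1 Ht2]. destruct (Rle_dec t t0) as [|Hl]; auto.
    specialize (Ht2 t0 ltac:(lra)). lra. }
  assert (Hlt : forall u, 0 <= u < T -> E u < c).
  { intros u Hu. apply NNPP; intro Hn2.
    assert (Hup : is_upper_bound A u).
    { intros t [Ht1 Ht2]. destruct (Rle_dec t u) as [|Hl]; auto.
      exfalso. apply Hn2. apply Ht2. lra. }
    specialize (HT2 u Hup). lra. }
  assert (HET : E T <= c).
  { destruct (Rle_dec (E T) c) as [|Hl]; auto. exfalso.
    destruct HT0 as [HT0|HT0].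
    - destruct (cont_eps E T (HC T) (E T - c) ltac:(lra)) as [d [Hd Hd2]].
      set (u := Rmax 0 (T - d/2)).
      assert (0 <= u < T). { unfold u. split. apply Rmax_l. apply Rmax_lub_lt; lra. }
      assert (Hu2: Rabs (u - T) < d).
      { assert (T - d/2 <= u) by apply Rmax_r. rewrite Rabs_left; lra. }
      assert (E u < c) by (apply Hlt; lra).
      assert (Rabs (E u - E T) < E T - c) by (apply Hd2; auto).
      rewrite Rabs_minus_sym in H2. apply Rabs_def2 in H2. lra.
    - subst T; lra. }
  assert (HETc : E T < c).
  { apply HB. lra. intros u Hu. destruct (Rle_lt_or_eq_dec u T) as [|He]; try lra.
    apply Rlt_le; apply Hlt; lra. subst; auto. }
  destruct (cont_eps E T (HC T) (c - E T) ltac:(lra)) as [d [Hd Hd2]].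
  assert (HAT : A (T + d/2)).
  { split. lra. intros u Hu. destruct (Rlt_le_dec u T). apply Hlt; lra.
    destruct (Req_dec u T). subst; auto.
    assert (Rabs (E u - E T) < c - E T).
    { apply Hd2. rewrite Rabs_right; lra. }
    apply Rabs_def2 in H1. lra. }
  specialize (HT1 _ HAT). lra.
Qed.

Lemma D_cont f f' : (forall s, derivable_pt_lim f s (f' s)) -> continuity f.
Proof. intros H x. apply derivable_continuous_pt. exists (f' x). apply H. Qed.

Lemma cont_bound f a b : a <= b -> continuity f -> exists B, 0 <= B /\ forall s, a <= s <= b -> Rabs (f s) <= B.
Proof.
  intros Hab Hc. destruct (continuity_ab_maj (fun s => Rabs (f s)) a b Hab) as [M [HM _]].
  { intros c _. apply continuity_pt_comp with (f2 := Rabs). apply Hc. apply Rcontinuity_abs. }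
  exists (Rabs (f M)). split. apply Rabs_pos. auto.
Qed.

Lemma zero_deriv f : (forall s, derivable_pt_lim f s 0) -> forall s, f s = f 0.
Proof.
  intros H s. destruct (Rtotal_order 0 s) as [Hs|[Hs|Hs]].
  - destruct (MVT_cor2 f (fun _ => 0) 0 s Hs (fun c _ => H c)) as [c [Hc _]]. lra.
  - subst; auto.
  - destruct (MVT_cor2 f (fun _ => 0) s 0 Hs (fun c _ => H c)) as [c [Hc _]]. lra.
Qed.

Lemma Rabs_le_between x B : Rabs x <= B -> - B <= x <= B.
Proof. intros H. split. pose proof (Rle_abs (-x)). rewrite Rabs_Ropp in H0. lra.
  pose proof (Rle_abs x); lra. Qed.

Definition gf := fun th : R => / sqrt (1 - / 2 * (sin th) ^ 2).
Definition kf (th : R) := sqrt (1 - / 2 * (sin th) ^ 2).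

Lemma arg_bounds th : / 2 <= 1 - / 2 * (sin th) ^ 2 <= 1.
Proof. pose proof (pow2_ge_0 (sin th)).
  assert (sin th ^ 2 <= 1). { pose proof (sin2_cos2 th). unfold Rsqr in H0. pose proof (pow2_ge_0 (cos th)). simpl in *. nra. }
  lra. Qed.

Lemma kf_pos th : 0 < kf th.
Proof. unfold kf. apply sqrt_lt_R0. pose proof (arg_bounds th). lra. Qed.
Lemma kf_sq th : kf th * kf th = 1 - / 2 * (sin th) ^ 2.
Proof. unfold kf. apply sqrt_sqrt. pose proof (arg_bounds th). lra. Qed.
Lemma kf_le1 th : kf th <= 1.
Proof. pose proof (kf_sq th). pose proof (kf_pos th). pose proof (arg_bounds th). nra. Qed.
Lemma gf_kf th : gf th = / kf th.
Proof. reflexivity. Qed.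
Lemma gf_ge1 th : 1 <= gf th.
Proof. rewrite gf_kf. pose proof (kf_le1 th). pose proof (kf_pos th).
  rewrite <- Rinv_1. apply Rinv_le_contravar; lra. Qed.

Lemma kf_deriv_gen f x a : derivable_pt_lim f x a ->
  derivable_pt_lim (fun t => kf (f t)) x (- sin (f x) * cos (f x) * a / (2 * kf (f x))).
Proof.
  intros H. unfold kf. eapply D_eq. apply D_sqrt. pose proof (arg_bounds (f x)). lra.
  dtac. cbv beta. pose proof (kf_pos (f x)) as Hk. unfold kf in Hk. simpl in *. field. lra.
Qed.

Lemma kf_cont th : continuity_pt kf th.
Proof. apply derivable_continuous_pt. eexists. apply (kf_deriv_gen (fun t => t) th 1). apply D_id. Qed.

Lemma gf_cont th : continuity_pt gf th.
Proof. unfold gf. apply continuity_pt_inv. apply kf_cont. pose proof (kf_pos th). unfold kf in H. lra. Qed.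

Lemma gf_int a b : Riemann_integrable gf a b.
Proof.
  destruct (Rle_dec a b). apply continuity_implies_RiemannInt; auto. intros; apply gf_cont.
  apply RiemannInt_P1. apply continuity_implies_RiemannInt. lra. intros; apply gf_cont.
Qed.

Lemma Rint_val a b (pr : Riemann_integrable gf a b) : Rint gf a b = RiemannInt pr.
Proof.
  unfold Rint.
  destruct (epsilon_spec (inhabits 0) (fun I => exists pr : Riemann_integrable gf a b, RiemannInt pr = I)
     (ex_intro _ _ (ex_intro _ pr eq_refl))) as [pr' Hpr'].
  rewrite <- Hpr'. apply RiemannInt_P5.
Qed.

Lemma Fell_eq x : Fell x = Rint gf 0 x.
Proof. reflexivity. Qed.

Lemma Fell_deriv x : derivable_pt_lim Fell x (gf x).
Proof.
  set (A := Rabs x + 1).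
  assert (h : -A <= A). { unfold A; pose proof (Rabs_pos x); lra. }
  assert (C0 : forall y, -A <= y <= A -> continuity_pt gf y) by (intros; apply gf_cont).
  set (P := primitive h (FTC_P1 h C0)).
  assert (HP : forall z, -A <= z <= A -> P z = RiemannInt (gf_int (-A) z)).
  { intros z Hz. unfold P, primitive. destruct (Rle_dec (-A) z); [|lra].
    destruct (Rle_dec z A); [|lra]. apply RiemannInt_P5. }
  assert (Hx : -A < x < A). { unfold A. split. pose proof (Rabs_pos x). pose proof (Rle_abs (-x)). rewrite Rabs_Ropp in *. lra. pose proof (RRle_abs x). lra. }
  apply derivable_pt_lim_locally_ext with (f := fun z => P z - P 0) (a := -A) (b := A); auto.
  - intros z Hz. rewrite Fell_eq, (Rint_val 0 z (gf_int 0 z)).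
    rewrite HP, HP by lra.
    rewrite <- (RiemannInt_P26 (gf_int (-A) 0) (gf_int 0 z) (gf_int (-A) z)). ring.
  - eapply D_eq. apply D_minus. apply (RiemannInt_P28 h C0). lra. apply D_const. ring.
Qed.

Lemma Fell0 : Fell 0 = 0.
Proof. rewrite Fell_eq, (Rint_val 0 0 (gf_int 0 0)). apply RiemannInt_P9. Qed.

Lemma Fell_mvt x y : x < y -> exists c, Fell y - Fell x = gf c * (y - x) /\ x < c < y.
Proof. intros H. apply (MVT_cor2 Fell gf x y H). intros; apply Fell_deriv. Qed.

Lemma Fell_incr x y : x < y -> Fell x < Fell y.
Proof. intros H. destruct (Fell_mvt x y H) as [c [Hc _]]. pose proof (gf_ge1 c). nra. Qed.

Lemma Fell_inj x y : Fell x = Fell y -> x = y.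
Proof. intros H. destruct (Rtotal_order x y) as [Hl|[He|Hl]]; auto.
  apply Fell_incr in Hl; lra. apply Fell_incr in Hl; lra. Qed.

Lemma Fell_cont : continuity Fell.
Proof. intro x. apply derivable_continuous_pt. exists (gf x). apply Fell_deriv. Qed.

Lemma Fell_surj u : exists phi, Fell phi = u.
Proof.
  set (A := Rabs u + 1).
  assert (H1 : Fell A >= A).
  { destruct (Fell_mvt 0 A) as [c [Hc _]]. unfold A; pose proof (Rabs_pos u); lra.
    rewrite Fell0 in Hc. pose proof (gf_ge1 c). assert (0 < A) by (unfold A; pose proof (Rabs_pos u); lra). nra. }
  assert (H2 : Fell (-A) <= -A).
  { destruct (Fell_mvt (-A) 0) as [c [Hc _]]. unfold A; pose proof (Rabs_pos u); lra.
    rewrite Fell0 in Hc. pose proof (gf_ge1 c). assert (0 < A) by (unfold A; pose proof (Rabs_pos u); lra). nra. }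
  destruct (IVT_cor (fun p => Fell p - u) (-A) A) as [z [_ Hz]].
  - intro p. apply continuity_pt_minus. apply Fell_cont. apply continuity_pt_const. intros a b; auto.
  - unfold A; pose proof (Rabs_pos u); lra.
  - assert (u < A) by (unfold A; pose proof (Rle_abs u); lra).
    assert (-A < u) by (unfold A; pose proof (Rle_abs (-u)); rewrite Rabs_Ropp in *; lra). nra.
  - exists z. lra.
Qed.

Lemma am_spec u : Fell (am u) = u.
Proof. unfold am. apply (epsilon_spec (inhabits 0) (fun phi => Fell phi = u)). apply Fell_surj. Qed.

Lemma am_Fell x : am (Fell x) = x.
Proof. apply Fell_inj. apply am_spec. Qed.

Lemma amK : am K = PI / 2.
Proof. unfold K. apply am_Fell. Qed.

Lemma am_deriv u : derivable_pt_lim am u (kf (am u)).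
Proof.
  intros eps Heps.
  destruct (cont_eps kf (am u) (kf_cont (am u)) eps Heps) as [d [Hd Hd2]].
  exists (mkposreal d Hd). intros h Hh Hhd. simpl in Hhd.
  set (a0 := am u). set (a1 := am (u + h)).
  assert (E0 : Fell a0 = u) by apply am_spec.
  assert (E1 : Fell a1 = u + h) by apply am_spec.
  assert (key : forall c, (c - a0) * (c - a1) <= 0 -> Fell a1 - Fell a0 = gf c * (a1 - a0) ->
    Rabs ((a1 - a0) / h - kf a0) < eps).
  { intros c Hc1 Hc2.
    assert (Hg : gf c * kf c = 1). { rewrite gf_kf. field. pose proof (kf_pos c). lra. }
    assert (Hq : (a1 - a0) / h = kf c).
    { rewrite E0, E1 in Hc2. replace (u + h - u) with h in Hc2 by ring.
      assert (a1 - a0 <> 0). { intro Hz. rewrite Hz, Rmult_0_r in Hc2. auto. }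
      pose proof (kf_pos c).
      rewrite Hc2, gf_kf. field. split; lra. }
    rewrite Hq. apply Hd2.
    assert (Rabs (a1 - a0) <= Rabs h).
    { assert (Hh2 : h = gf c * (a1 - a0)) by (rewrite <- Hc2, E0, E1; ring). rewrite Hh2.
      rewrite Rabs_mult. pose proof (gf_ge1 c). rewrite (Rabs_right (gf c)) by lra.
      pose proof (Rabs_pos (a1 - a0)). nra. }
    assert (Rabs (c - a0) <= Rabs (a1 - a0)).
    { destruct (Rle_dec a0 a1).
      - assert (a0 <= c <= a1 \/ c = a0). { destruct (Req_dec c a0); [right; auto|left]. nra. }
        rewrite !Rabs_right; lra.
      - assert (a1 <= c <= a0). { destruct (Req_dec c a0); [lra|]. nra. }
        rewrite !Rabs_left1; lra. }
    change (am u) with a0. lra. }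
  destruct (Rtotal_order a0 a1) as [Hl|[He|Hl]].
  - destruct (Fell_mvt a0 a1 Hl) as [c [Hc Hc2]]. apply (key c); auto. nra.
  - exfalso. apply Hh. rewrite He in E0. lra.
  - destruct (Fell_mvt a1 a0 Hl) as [c [Hc Hc2]]. apply (key c). nra. lra.
Qed.

Lemma phi_deriv s : derivable_pt_lim (fun t => am (K + t)) s (kf (am (K + s))).
Proof. eapply D_eq. apply (D_comp am (fun t => K + t)). eapply D_plus. apply D_const. apply D_id.
  apply am_deriv. cbv beta. ring. Qed.

Lemma uniq_fwd (Y P Y2 P2 : R -> R) :
  (forall s, derivable_pt_lim Y s (P s)) -> (forall s, derivable_pt_lim P s (- / 2 * Y s ^ 3)) ->
  (forall s, derivable_pt_lim Y2 s (P2 s)) -> (forall s, derivable_pt_lim P2 s (- / 2 * Y2 s ^ 3)) ->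
  Y 0 = Y2 0 -> P 0 = P2 0 -> forall T, 0 <= T -> Y T = Y2 T.
Proof.
  intros HY HP HY2 HP2 E1 E2 T HT.
  destruct (cont_bound Y 0 T HT (D_cont _ _ HY)) as [B1 [HB1 HB1']].
  destruct (cont_bound Y2 0 T HT (D_cont _ _ HY2)) as [B2 [HB2 HB2']].
  set (B := B1 + B2).
  set (E := fun s => (Y s - Y2 s)^2 + (P s - P2 s)^2).
  set (E' := fun s => 2 * (Y s - Y2 s) * (P s - P2 s) + 2 * (P s - P2 s) * (- / 2 * Y s ^ 3 - - / 2 * Y2 s ^ 3)).
  assert (HD : forall s, derivable_pt_lim E s (E' s)).
  { intro s. unfold E, E'. eapply D_eq. dtac. cbv beta. simpl. ring. }
  set (a := 1 + 3 * B^2).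
  assert (Ha : 0 < a) by (unfold a; nra).
  assert (HI : forall s, 0 <= s <= T -> E' s <= a * E s + 0).
  { intros s Hs. specialize (HB1' s Hs). specialize (HB2' s Hs). unfold E', E, a.
    set (u := Y s) in *. set (v := Y2 s) in *. set (p := P s - P2 s).
    assert (Hf : - / 2 * u ^ 3 - - / 2 * v ^ 3 = - / 2 * (u - v) * (u*u + u*v + v*v)) by ring.
    rewrite Hf.
    assert (Hq : Rabs (u*u + u*v + v*v) <= 3 * B^2).
    { unfold B. apply Rabs_le_between in HB1'. apply Rabs_le_between in HB2'.
      assert (Rabs u <= B1 + B2) by (apply Rabs_le; lra).
      assert (Rabs v <= B1 + B2) by (apply Rabs_le; lra).
      eapply Rle_trans. eapply b_add. eapply b_add. eapply b_mul; eassumption. eapply b_mul; eassumption.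
      eapply b_mul; eassumption. simpl. lra. }
    set (w := u*u + u*v + v*v) in *. set (d := u - v).
    apply Rabs_le_between in Hq.
    assert (0 <= B^2) by nra.
    assert (2 * d * p <= d^2 + p^2) by (pose proof (pow2_ge_0 (d - p)); nra).
    assert (2 * p * (- / 2 * d * w) <= 3 * B^2 * (d^2 + p^2)).
    { replace (2 * p * (- / 2 * d * w)) with (- (p * d) * w) by field.
      assert (Rabs (p*d) * 2 <= d^2 + p^2). { rewrite Rabs_mult. pose proof (Rabs_pos p); pose proof (Rabs_pos d).
        pose proof (pow2_abs p). pose proof (pow2_abs d). pose proof (pow2_ge_0 (Rabs p - Rabs d)).
        nra. }
      assert (Rabs (- (p*d) * w) <= Rabs (p*d) * (3 * B^2)).
      { rewrite Rabs_mult, Rabs_Ropp. apply Rmult_le_compat_l. apply Rabs_pos. apply Rabs_le. lra. }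
      assert (- (p*d) * w <= Rabs (- (p*d) * w)) by apply Rle_abs.
      pose proof (Rabs_pos (p*d)). nra. }
    nra. }
  pose proof (gronwall E E' a 0 T Ha (Rle_refl 0) HT HD HI) as HG.
  unfold E in HG at 2. rewrite E1, E2 in HG. replace ((Y2 0 - Y2 0) ^ 2 + (P2 0 - P2 0) ^ 2 + 0 / a) with 0 in HG by (field; lra).
  rewrite Rmult_0_l in HG. unfold E in HG. assert ((Y T - Y2 T)^2 = 0) by (pose proof (pow2_ge_0 (Y T - Y2 T)); pose proof (pow2_ge_0 (P T - P2 T)); lra).
  assert (Y T - Y2 T = 0) by nra. lra.
Qed.

Lemma uniq (Y P Y2 P2 : R -> R) :
  (forall s, derivable_pt_lim Y s (P s)) -> (forall s, derivable_pt_lim P s (- / 2 * Y s ^ 3)) ->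
  (forall s, derivable_pt_lim Y2 s (P2 s)) -> (forall s, derivable_pt_lim P2 s (- / 2 * Y2 s ^ 3)) ->
  Y 0 = Y2 0 -> P 0 = P2 0 -> forall T, Y T = Y2 T.
Proof.
  intros HY HP HY2 HP2 E1 E2 T. destruct (Rle_dec 0 T). eapply uniq_fwd; eauto.
  assert (Hr : forall (Y P : R -> R), (forall s, derivable_pt_lim Y s (P s)) -> (forall s, derivable_pt_lim P s (- / 2 * Y s ^ 3)) ->
     (forall s, derivable_pt_lim (fun t => Y (- t)) s (- P (- s))) /\ (forall s, derivable_pt_lim (fun t => - P (- t)) s (- / 2 * Y (- s) ^ 3))).
  { intros Y' P' H1 H2. split; intro s.
    - eapply D_eq. apply (D_comp Y' (fun t => - t)). apply D_opp, D_id. apply H1. ring.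
    - eapply D_eq. apply D_opp. apply (D_comp P' (fun t => - t)). apply D_opp, D_id. apply H2. ring. }
  destruct (Hr Y P HY HP) as [A1 A2]. destruct (Hr Y2 P2 HY2 HP2) as [A3 A4].
  pose proof (uniq_fwd _ _ _ _ A1 A2 A3 A4) as U. cbv beta in U.
  replace T with (- - T) by ring. apply U. rewrite Ropp_0; auto. rewrite Ropp_0, E2; auto. lra.
Qed.

Lemma closed_form (sigma tau : R) (Hsigma : sigma = 1 \/ sigma = -1) (Htau : tau = 1 \/ tau = -1)
  (Y0 Z0 PY0 PZ0 : R -> R)
  (H0 : order0_system Y0 Z0 PY0 PZ0)
  (H0i : Y0 0 = 0 /\ Z0 0 = 0 /\ PY0 0 = sigma /\ PZ0 0 = tau) :
  forall s : R,
     Y0 s = - PY0 0 * sqrt 2 * cn (K + s) /\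
     Z0 s = PZ0 s / 3 * (s + 2 * sn (K + s) * cn (K + s) * dn (K + s)).
Proof.
  destruct H0i as (I1 & I2 & I3 & I4).
  assert (Hs2 : sigma ^ 2 = 1) by (destruct Hsigma; subst; ring).
  assert (Ht2 : tau ^ 2 = 1) by (destruct Htau; subst; ring).
  assert (HPZ : forall s, PZ0 s = tau).
  { intro s. rewrite <- I4. apply zero_deriv. intro; apply H0. }
  set (phi := fun s => am (K + s)).
  assert (Hphi : forall s, derivable_pt_lim phi s (kf (phi s))) by (intro; apply phi_deriv).
  set (cY := fun s => - sigma * sqrt 2 * cos (phi s)).
  set (cP := fun s => sigma * sqrt 2 * sin (phi s) * kf (phi s)).
  assert (Hk : forall s, derivable_pt_lim (fun t => kf (phi t)) s (- sin (phi s) * cos (phi s) / 2)).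
  { intro s. eapply D_eq. apply kf_deriv_gen. apply Hphi. field. pose proof (kf_pos (phi s)); lra. }
  assert (Hs2' : sqrt 2 * sqrt 2 = 2) by (apply sqrt_sqrt; lra).
  assert (HcY : forall s, derivable_pt_lim cY s (cP s)).
  { intro s. unfold cY, cP. eapply D_eq. dtac. cbv beta. ring. }
  assert (HcP : forall s, derivable_pt_lim cP s (- / 2 * cY s ^ 3)).
  { intro s. unfold cY, cP. eapply D_eq. dtac. cbv beta.
    pose proof (kf_sq (phi s)) as Hq. pose proof (sin2_cos2 (phi s)) as Hsc. unfold Rsqr in Hsc.
    set (S := sin (phi s)) in *. set (C := cos (phi s)) in *. set (k := kf (phi s)) in *.
    transitivity (sigma * sqrt 2 * C * (k * k - S * S / 2)). field. rewrite Hq.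
    transitivity (sigma * sqrt 2 * C * (1 - S * S)). field.
    replace (S * S) with (1 - C * C) by lra.
    replace (-/2 * (- sigma * sqrt 2 * C)^3) with (sigma^2 * (sqrt 2 * sqrt 2) * (sigma * sqrt 2 * C * C * C) / 2) by field.
    rewrite Hs2, Hs2'. field. }
  assert (phi0 : phi 0 = PI / 2) by (unfold phi; rewrite Rplus_0_r; apply amK).
  assert (Hk0 : kf (PI/2) = sqrt (/ 2)).
  { unfold kf. rewrite sin_PI2. f_equal. field. }
  assert (HYeq : forall s, Y0 s = cY s).
  { apply (uniq Y0 PY0 cY cP).
    - intro; apply H0.
    - intro s. eapply D_eq. apply H0. rewrite HPZ, Ht2. ring.
    - auto. - auto.
    - unfold cY. rewrite phi0, cos_PI2, I1. ring.
    - unfold cP. rewrite phi0, sin_PI2, Hk0, I3. rewrite Rmult_1_r, Rmult_assoc, <- sqrt_mult by lra.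
      rewrite Rinv_r by lra. rewrite sqrt_1. ring. }
  set (Zc := fun s => tau / 3 * (s + 2 * sin (phi s) * cos (phi s) * kf (phi s))).
  assert (HZc : forall s, derivable_pt_lim Zc s (tau * cos (phi s) ^ 4)).
  { intro s. unfold Zc. eapply D_eq. dtac. cbv beta.
    pose proof (kf_sq (phi s)) as Hq. pose proof (sin2_cos2 (phi s)) as Hsc. unfold Rsqr in Hsc.
    set (S := sin (phi s)) in *. set (C := cos (phi s)) in *. set (k := kf (phi s)) in *.
    transitivity (tau / 3 * (1 + 2 * ((C * C - S * S) * (k * k) - S * S * (C * C) / 2))). field.
    rewrite Hq.
    transitivity (tau / 3 * (1 + 2 * ((C * C - S * S) * (1 - S * S / 2) - S * S * (C * C) / 2))). field.
    replace (S * S) with (1 - C * C) by lra. field. }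
  assert (HZeq : forall s, Z0 s = Zc s).
  { assert (Hz : forall s, derivable_pt_lim (fun t => Z0 t - Zc t) s 0).
    { intro s. eapply D_eq. apply D_minus. apply H0. apply HZc. rewrite HPZ, HYeq. unfold cY.
      replace ((- sigma * sqrt 2 * cos (phi s)) ^ 4) with (sigma^2 * sigma^2 * ((sqrt 2 * sqrt 2) * (sqrt 2 * sqrt 2)) * cos (phi s) ^ 4) by ring.
      rewrite Hs2, Hs2'. field. }
    intro s. pose proof (zero_deriv _ Hz s). cbv beta in H.
    assert (Zc 0 = 0). { unfold Zc. rewrite phi0, cos_PI2. ring. }
    lra. }
  intro s. split.
  - rewrite HYeq, I3. unfold cY, cn, phi. ring.
  - rewrite HZeq, HPZ. unfold Zc, sn, cn, dn, phi. unfold kf. reflexivity.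
Qed.

Definition qZ1 (e f n y0 z0 p0 q0 y1 z1 p1 q1 ry rz rp rq : R) : R := (/ 4 * ry^3 * rq + / 4 * q0 * ry^3 + y0 * ry^2 * rq + y0 * q0 * ry^2 + 3 * / 2 * y0^2 * ry * rq + 3 * / 2 * y0^2 * q0 * ry + y0^3 * rq + y0^3 * q0 + / 4 * n * q1 * ry^3 + n * y1 * ry^2 * rq + n * q0 * y1 * ry^2 + n * y0 * q1 * ry^2 + 3 * n * y0 * y1 * ry * rq + 3 * n * y0 * q0 * y1 * ry + 3 * / 2 * n * y0^2 * q1 * ry + 3 * n * y0^2 * y1 * rq + 3 * n * y0^2 * q0 * y1 + n * y0^3 * q1 + n * f * ry^4 * rq + n * f * q0 * ry^4 + 5 * n * f * y0 * ry^3 * rq + 5 * n * f * y0 * q0 * ry^3 + 10 * n * f * y0^2 * ry^2 * rq + 10 * n * f * y0^2 * q0 * ry^2 + 10 * n * f * y0^3 * ry * rq + 10 * n * f * y0^3 * q0 * ry + 5 * n * f * y0^4 * rq + 5 * n * f * y0^4 * q0 + n * e * ry * rz * rq + n * e * q0 * ry * rz + n * e * z0 * ry * rq + n * e * z0 * q0 * ry + 2 * n * e * y0 * rz * rq + 2 * n * e * y0 * q0 * rz + 2 * n * e * y0 * z0 * rq + 2 * n * e * y0 * z0 * q0 + n^2 * y1 * q1 * ry^2 + 3 * / 2 * n^2 * y1^2 * ry * rq + 3 * / 2 * n^2 * q0 * y1^2 * ry + 3 * n^2 * y0 * y1 * q1 * ry + 3 * n^2 * y0 * y1^2 * rq + 3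 * n^2 * y0 * q0 * y1^2 + 3 * n^2 * y0^2 * y1 * q1 + n^2 * f * q1 * ry^4 + 5 * n^2 * f * y1 * ry^3 * rq + 5 * n^2 * f * q0 * y1 * ry^3 + 5 * n^2 * f * y0 * q1 * ry^3 + 20 * n^2 * f * y0 * y1 * ry^2 * rq + 20 * n^2 * f * y0 * q0 * y1 * ry^2 + 10 * n^2 * f * y0^2 * q1 * ry^2 + 30 * n^2 * f * y0^2 * y1 * ry * rq + 30 * n^2 * f * y0^2 * q0 * y1 * ry + 10 * n^2 * f * y0^3 * q1 * ry + 20 * n^2 * f * y0^3 * y1 * rq + 20 * n^2 * f * y0^3 * q0 * y1 + 5 * n^2 * f * y0^4 * q1 + n^2 * f^2 * ry^5 * rq + n^2 * f^2 * q0 * ry^5 + 6 * n^2 * f^2 * y0 * ry^4 * rq + 6 * n^2 * f^2 * y0 * q0 * ry^4 + 15 * n^2 * f^2 * y0^2 * ry^3 * rq + 15 * n^2 * f^2 * y0^2 * q0 * ry^3 + 20 * n^2 * f^2 * y0^3 * ry^2 * rq + 20 * n^2 * f^2 * y0^3 * q0 * ry^2 + 15 * n^2 * f^2 * y0^4 * ry * rq + 15 * n^2 * f^2 * y0^4 * q0 * ry + 6 * n^2 * f^2 * y0^5 * rq + 6 * n^2 * f^2 * y0^5 * q0 + n^2 * e * q1 * ry * rz + n^2 * e * z1 * ry * rq + 2 * n^2 * e * y1 * rz * rq + n^2 * e * q0 * z1 * ry + 2 * n^2 * e * q0 * y1 * rz + n^2 * e * z0 * q1 * ry + 2 * n^2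 * e * z0 * y1 * rq + 2 * n^2 * e * z0 * q0 * y1 + 2 * n^2 * e * y0 * q1 * rz + 2 * n^2 * e * y0 * z1 * rq + 2 * n^2 * e * y0 * q0 * z1 + 2 * n^2 * e * y0 * z0 * q1 + 2 * n^2 * e * f * ry^2 * rz * rq + 2 * n^2 * e * f * q0 * ry^2 * rz + 2 * n^2 * e * f * z0 * ry^2 * rq + 2 * n^2 * e * f * z0 * q0 * ry^2 + 6 * n^2 * e * f * y0 * ry * rz * rq + 6 * n^2 * e * f * y0 * q0 * ry * rz + 6 * n^2 * e * f * y0 * z0 * ry * rq + 6 * n^2 * e * f * y0 * z0 * q0 * ry + 6 * n^2 * e * f * y0^2 * rz * rq + 6 * n^2 * e * f * y0^2 * q0 * rz + 6 * n^2 * e * f * y0^2 * z0 * rq + 6 * n^2 * e * f * y0^2 * z0 * q0 + 3 * / 2 * n^3 * y1^2 * q1 * ry + n^3 * y1^3 * rq + n^3 * q0 * y1^3 + 3 * n^3 * y0 * y1^2 * q1 + 5 * n^3 * f * y1 * q1 * ry^3 + 10 * n^3 * f * y1^2 * ry^2 * rq + 10 * n^3 * f * q0 * y1^2 * ry^2 + 20 * n^3 * f * y0 * y1 * q1 * ry^2 + 30 * n^3 * f * y0 * y1^2 * ry * rq + 30 * n^3 * f * y0 * q0 * y1^2 * ry + 30 * n^3 * f * y0^2 * y1 * q1 * ry + 30 * n^3 * f * y0^2 * y1^2 * rq + 30 * n^3 * f * y0^2 * q0 * y1^2 + 20 * n^3 * f * y0^3 * y1 * q1 + n^3 * f^2 *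 q1 * ry^5 + 6 * n^3 * f^2 * y1 * ry^4 * rq + 6 * n^3 * f^2 * q0 * y1 * ry^4 + 6 * n^3 * f^2 * y0 * q1 * ry^4 + 30 * n^3 * f^2 * y0 * y1 * ry^3 * rq + 30 * n^3 * f^2 * y0 * q0 * y1 * ry^3 + 15 * n^3 * f^2 * y0^2 * q1 * ry^3 + 60 * n^3 * f^2 * y0^2 * y1 * ry^2 * rq + 60 * n^3 * f^2 * y0^2 * q0 * y1 * ry^2 + 20 * n^3 * f^2 * y0^3 * q1 * ry^2 + 60 * n^3 * f^2 * y0^3 * y1 * ry * rq + 60 * n^3 * f^2 * y0^3 * q0 * y1 * ry + 15 * n^3 * f^2 * y0^4 * q1 * ry + 30 * n^3 * f^2 * y0^4 * y1 * rq + 30 * n^3 * f^2 * y0^4 * q0 * y1 + 6 * n^3 * f^2 * y0^5 * q1 + n^3 * e * z1 * q1 * ry + 2 * n^3 * e * y1 * q1 * rz + 2 * n^3 * e * y1 * z1 * rq + 2 * n^3 * e * q0 * y1 * z1 + 2 * n^3 * e * z0 * y1 * q1 + 2 * n^3 * e * y0 * z1 * q1 + 2 * n^3 * e * f * q1 * ry^2 * rz + 2 * n^3 * e * f * z1 * ry^2 * rq + 6 * n^3 * e * f * y1 * ry * rz * rq + 2 * n^3 * e * f * q0 * z1 * ry^2 + 6 * n^3 * e * f * q0 * y1 * ry * rz + 2 * n^3 * e * f * z0 * q1 * ry^2 + 6 * n^3 * e * f * z0 * y1 * ry * rq + 6 * n^3 * e * f * z0 * q0 * y1 * ry + 6 *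 n^3 * e * f * y0 * q1 * ry * rz + 6 * n^3 * e * f * y0 * z1 * ry * rq + 12 * n^3 * e * f * y0 * y1 * rz * rq + 6 * n^3 * e * f * y0 * q0 * z1 * ry + 12 * n^3 * e * f * y0 * q0 * y1 * rz + 6 * n^3 * e * f * y0 * z0 * q1 * ry + 12 * n^3 * e * f * y0 * z0 * y1 * rq + 12 * n^3 * e * f * y0 * z0 * q0 * y1 + 6 * n^3 * e * f * y0^2 * q1 * rz + 6 * n^3 * e * f * y0^2 * z1 * rq + 6 * n^3 * e * f * y0^2 * q0 * z1 + 6 * n^3 * e * f * y0^2 * z0 * q1 + n^4 * y1^3 * q1 + 10 * n^4 * f * y1^2 * q1 * ry^2 + 10 * n^4 * f * y1^3 * ry * rq + 10 * n^4 * f * q0 * y1^3 * ry + 30 * n^4 * f * y0 * y1^2 * q1 * ry + 20 * n^4 * f * y0 * y1^3 * rq + 20 * n^4 * f * y0 * q0 * y1^3 + 30 * n^4 * f * y0^2 * y1^2 * q1 + 6 * n^4 * f^2 * y1 * q1 * ry^4 + 15 * n^4 * f^2 * y1^2 * ry^3 * rq + 15 * n^4 * f^2 * q0 * y1^2 * ry^3 + 30 * n^4 * f^2 * y0 * y1 * q1 * ry^3 + 60 * n^4 * f^2 * y0 * y1^2 * ry^2 * rq + 60 * n^4 * f^2 * y0 * q0 * y1^2 * ry^2 + 60 * n^4 * f^2 * y0^2 * y1 * q1 * ry^2 + 90 * n^4 * f^2 * y0^2 * y1^2 * ry * rq + 90 * n^4 * f^2 * y0^2 * q0 * y1^2 *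 ry + 60 * n^4 * f^2 * y0^3 * y1 * q1 * ry + 60 * n^4 * f^2 * y0^3 * y1^2 * rq + 60 * n^4 * f^2 * y0^3 * q0 * y1^2 + 30 * n^4 * f^2 * y0^4 * y1 * q1 + 2 * n^4 * e * y1 * z1 * q1 + 2 * n^4 * e * f * z1 * q1 * ry^2 + 6 * n^4 * e * f * y1 * q1 * ry * rz + 6 * n^4 * e * f * y1 * z1 * ry * rq + 6 * n^4 * e * f * y1^2 * rz * rq + 6 * n^4 * e * f * q0 * y1 * z1 * ry + 6 * n^4 * e * f * q0 * y1^2 * rz + 6 * n^4 * e * f * z0 * y1 * q1 * ry + 6 * n^4 * e * f * z0 * y1^2 * rq + 6 * n^4 * e * f * z0 * q0 * y1^2 + 6 * n^4 * e * f * y0 * z1 * q1 * ry + 12 * n^4 * e * f * y0 * y1 * q1 * rz + 12 * n^4 * e * f * y0 * y1 * z1 * rq + 12 * n^4 * e * f * y0 * q0 * y1 * z1 + 12 * n^4 * e * f * y0 * z0 * y1 * q1 + 6 * n^4 * e * f * y0^2 * z1 * q1 + 10 * n^5 * f * y1^3 * q1 * ry + 5 * n^5 * f * y1^4 * rq + 5 * n^5 * f * q0 * y1^4 + 20 * n^5 * f * y0 * y1^3 * q1 + 15 * n^5 * f^2 * y1^2 * q1 * ry^3 + 20 * n^5 * f^2 * y1^3 * ry^2 * rq + 20 * n^5 * f^2 * q0 * y1^3 * ry^2 + 60 * n^5 * f^2 * y0 * y1^2 * q1 * ry^2 + 60 * n^5 * f^2 * y0 * y1^3 * ry * rq + 60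 * n^5 * f^2 * y0 * q0 * y1^3 * ry + 90 * n^5 * f^2 * y0^2 * y1^2 * q1 * ry + 60 * n^5 * f^2 * y0^2 * y1^3 * rq + 60 * n^5 * f^2 * y0^2 * q0 * y1^3 + 60 * n^5 * f^2 * y0^3 * y1^2 * q1 + 6 * n^5 * e * f * y1 * z1 * q1 * ry + 6 * n^5 * e * f * y1^2 * q1 * rz + 6 * n^5 * e * f * y1^2 * z1 * rq + 6 * n^5 * e * f * q0 * y1^2 * z1 + 6 * n^5 * e * f * z0 * y1^2 * q1 + 12 * n^5 * e * f * y0 * y1 * z1 * q1 + 5 * n^6 * f * y1^4 * q1 + 20 * n^6 * f^2 * y1^3 * q1 * ry^2 + 15 * n^6 * f^2 * y1^4 * ry * rq + 15 * n^6 * f^2 * q0 * y1^4 * ry + 60 * n^6 * f^2 * y0 * y1^3 * q1 * ry + 30 * n^6 * f^2 * y0 * y1^4 * rq + 30 * n^6 * f^2 * y0 * q0 * y1^4 + 60 * n^6 * f^2 * y0^2 * y1^3 * q1 + 6 * n^6 * e * f * y1^2 * z1 * q1 + 15 * n^7 * f^2 * y1^4 * q1 * ry + 6 * n^7 * f^2 * y1^5 * rq + 6 * n^7 * f^2 * q0 * y1^5 + 30 * n^7 * f^2 * y0 * y1^4 * q1 + 6 * n^8 * f^2 * y1^5 * q1).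
Definition qZ2 (e f n y0 z0 p0 q0 y1 z1 p1 q1 ry rz rp rq : R) : R := (n * e * y0^2 * rq + n * e * y0^2 * q0 + 2 * n^2 * e * y0 * y1 * rq + 2 * n^2 * e * y0 * q0 * y1 + n^2 * e * y0^2 * q1 + 2 * n^2 * e * f * y0^3 * rq + 2 * n^2 * e * f * y0^3 * q0 + n^2 * e^2 * rz * rq + n^2 * e^2 * q0 * rz + 2 * n^2 * e^2 * z0 * rq + 2 * n^2 * e^2 * z0 * q0 + n^3 * e * y1^2 * rq + n^3 * e * q0 * y1^2 + 2 * n^3 * e * y0 * y1 * q1 + 6 * n^3 * e * f * y0^2 * y1 * rq + 6 * n^3 * e * f * y0^2 * q0 * y1 + 2 * n^3 * e * f * y0^3 * q1 + n^3 * e^2 * q1 * rz + 2 * n^3 * e^2 * z1 * rq + 2 * n^3 * e^2 * q0 * z1 + 2 * n^3 * e^2 * z0 * q1 + n^4 * e * y1^2 * q1 + 6 * n^4 * e * f * y0 * y1^2 * rq + 6 * n^4 * e * f * y0 * q0 * y1^2 + 6 * n^4 * e * f * y0^2 * y1 * q1 + 2 * n^4 * e^2 * z1 * q1 + 2 * n^5 * e * f * y1^3 * rq + 2 * n^5 * e * f * q0 * y1^3 + 6 * n^5 * e * f * y0 * y1^2 * q1 + 2 * n^6 * e * f * y1^3 * q1).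
Definition qZ3 (e f n y0 z0 p0 q0 y1 z1 p1 q1 ry rz rp rq : R) : R := 0.
Definition qZ4 (e f n y0 z0 p0 q0 y1 z1 p1 q1 ry rz rp rq : R) : R := (/ 4 * y0^4 + n * y0^3 * y1 + n * f * y0^5 + n * e * y0^2 * z0 + 3 * / 2 * n^2 * y0^2 * y1^2 + 5 * n^2 * f * y0^4 * y1 + n^2 * f^2 * y0^6 + 2 * n^2 * e * y0 * z0 * y1 + n^2 * e * y0^2 * z1 + 2 * n^2 * e * f * y0^3 * z0 + n^2 * e^2 * z0^2 + n^3 * y0 * y1^3 + 10 * n^3 * f * y0^3 * y1^2 + 6 * n^3 * f^2 * y0^5 * y1 + n^3 * e * z0 * y1^2 + 2 * n^3 * e * y0 * y1 * z1 + 6 * n^3 * e * f * y0^2 * z0 * y1 + 2 * n^3 * e * f * y0^3 * z1 + 2 * n^3 * e^2 * z0 * z1 + / 4 * n^4 * y1^4 + 10 * n^4 * f * y0^2 * y1^3 + 15 * n^4 * f^2 * y0^4 * y1^2 + n^4 * e * y1^2 * z1 + 6 * n^4 * e * f * y0 * z0 * y1^2 + 6 * n^4 * e * f * y0^2 * y1 * z1 + n^4 * e^2 * z1^2 + 5 * n^5 * f * y0 * y1^4 + 20 * n^5 * f^2 * y0^3 * y1^3 + 2 * n^5 * e * f * z0 * y1^3 + 6 * n^5 * e * f * y0 * y1^2 * z1 + n^6 * f * y1^5 + 15 * n^6 * f^2 * y0^2 * y1^4 + 2 * n^6 * e * f * y1^3 * z1 + 6 * n^7 * f^2 * y0 * y1^5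 + n^8 * f^2 * y1^6).
Definition hZ (e f n y0 z0 p0 q0 y1 z1 p1 q1 ry rz rp rq : R) : R := (3 * / 2 * y0^2 * q0 * y1^2 + y0^3 * y1 * q1 + 5 * f * y0^4 * q0 * y1 + f * y0^5 * q1 + f^2 * y0^6 * q0 + 2 * e * y0 * z0 * q0 * y1 + e * y0^2 * q0 * z1 + e * y0^2 * z0 * q1 + 2 * e * f * y0^3 * z0 * q0 + e^2 * z0^2 * q0 + n * y0 * q0 * y1^3 + 3 * / 2 * n * y0^2 * y1^2 * q1 + 10 * n * f * y0^3 * q0 * y1^2 + 5 * n * f * y0^4 * y1 * q1 + 6 * n * f^2 * y0^5 * q0 * y1 + n * f^2 * y0^6 * q1 + n * e * z0 * q0 * y1^2 + 2 * n * e * y0 * q0 * y1 * z1 + 2 * n * e * y0 * z0 * y1 * q1 + n * e * y0^2 * z1 * q1 + 6 * n * e * f * y0^2 * z0 * q0 * y1 + 2 * n * e * f * y0^3 * q0 * z1 + 2 * n * e * f * y0^3 * z0 * q1 + 2 * n * e^2 * z0 * q0 * z1 + n * e^2 * z0^2 * q1 + / 4 * n^2 * q0 * y1^4 + n^2 * y0 * y1^3 * q1 + 10 * n^2 * f * y0^2 * q0 * y1^3 + 10 * n^2 * f * y0^3 * y1^2 * q1 + 15 * n^2 * f^2 * y0^4 * q0 * y1^2 + 6 * n^2 * f^2 * y0^5 * y1 * q1 + n^2 * e * q0 * y1^2 * z1 + n^2 * e * z0 * y1^2 * q1 + 2 * n^2 * e * y0 * y1 * z1 * q1 + 6 * n^2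 * e * f * y0 * z0 * q0 * y1^2 + 6 * n^2 * e * f * y0^2 * q0 * y1 * z1 + 6 * n^2 * e * f * y0^2 * z0 * y1 * q1 + 2 * n^2 * e * f * y0^3 * z1 * q1 + n^2 * e^2 * q0 * z1^2 + 2 * n^2 * e^2 * z0 * z1 * q1 + / 4 * n^3 * y1^4 * q1 + 5 * n^3 * f * y0 * q0 * y1^4 + 10 * n^3 * f * y0^2 * y1^3 * q1 + 20 * n^3 * f^2 * y0^3 * q0 * y1^3 + 15 * n^3 * f^2 * y0^4 * y1^2 * q1 + n^3 * e * y1^2 * z1 * q1 + 2 * n^3 * e * f * z0 * q0 * y1^3 + 6 * n^3 * e * f * y0 * q0 * y1^2 * z1 + 6 * n^3 * e * f * y0 * z0 * y1^2 * q1 + 6 * n^3 * e * f * y0^2 * y1 * z1 * q1 + n^3 * e^2 * z1^2 * q1 + n^4 * f * q0 * y1^5 + 5 * n^4 * f * y0 * y1^4 * q1 + 15 * n^4 * f^2 * y0^2 * q0 * y1^4 + 20 * n^4 * f^2 * y0^3 * y1^3 * q1 + 2 * n^4 * e * f * q0 * y1^3 * z1 + 2 * n^4 * e * f * z0 * y1^3 * q1 + 6 * n^4 * e * f * y0 * y1^2 * z1 * q1 + n^5 * f * y1^5 * q1 + 6 * n^5 * f^2 * y0 * q0 * y1^5 + 15 * n^5 * f^2 * y0^2 * y1^4 * q1 + 2 * n^5 * e * f * y1^3 * z1 * q1 + n^6 * f^2 * q0 * y1^6 + 6 * n^6 * f^2 * y0 * y1^5 * q1 + n^7 * f^2 * y1^6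 * q1).
Definition qP1 (e f n y0 z0 p0 q0 y1 z1 p1 q1 ry rz rp rq : R) : R := (- / 2 * ry^2 * rq^2 - q0 * ry^2 * rq - / 2 * q0^2 * ry^2 - 3 * / 2 * y0 * ry * rq^2 - 3 * y0 * q0 * ry * rq - 3 * / 2 * y0 * q0^2 * ry - 3 * / 2 * y0^2 * rq^2 - 3 * y0^2 * q0 * rq - 3 * / 2 * y0^2 * q0^2 - n * q1 * ry^2 * rq - 3 * / 2 * n * y1 * ry * rq^2 - n * q0 * q1 * ry^2 - 3 * n * q0 * y1 * ry * rq - 3 * / 2 * n * q0^2 * y1 * ry - 3 * n * y0 * q1 * ry * rq - 3 * n * y0 * y1 * rq^2 - 3 * n * y0 * q0 * q1 * ry - 6 * n * y0 * q0 * y1 * rq - 3 * n * y0 * q0^2 * y1 - 3 * n * y0^2 * q1 * rq - 3 * n * y0^2 * q0 * q1 - 5 * / 2 * n * f * ry^3 * rq^2 - 5 * n * f * q0 * ry^3 * rq - 5 * / 2 * n * f * q0^2 * ry^3 - 10 * n * f * y0 * ry^2 * rq^2 - 20 * n * f * y0 * q0 * ry^2 * rq - 10 * n * f * y0 * q0^2 * ry^2 - 15 * n * f * y0^2 * ry * rq^2 - 30 * n * f * y0^2 * q0 * ry * rq - 15 * n * f * y0^2 * q0^2 * ry - 10 * n * f * y0^3 * rq^2 - 20 * n * f * y0^3 * q0 * rq - 10 * n * f * y0^3 * q0^2 - n * e * rz * rq^2 - 2 * n * e * q0 * rz * rq - n * e * q0^2 * rz - n * e * z0 * rq^2 - 2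 * n * e * z0 * q0 * rq - n * e * z0 * q0^2 - / 2 * n^2 * q1^2 * ry^2 - 3 * n^2 * y1 * q1 * ry * rq - 3 * / 2 * n^2 * y1^2 * rq^2 - 3 * n^2 * q0 * y1 * q1 * ry - 3 * n^2 * q0 * y1^2 * rq - 3 * / 2 * n^2 * q0^2 * y1^2 - 3 * / 2 * n^2 * y0 * q1^2 * ry - 6 * n^2 * y0 * y1 * q1 * rq - 6 * n^2 * y0 * q0 * y1 * q1 - 3 * / 2 * n^2 * y0^2 * q1^2 - 5 * n^2 * f * q1 * ry^3 * rq - 10 * n^2 * f * y1 * ry^2 * rq^2 - 5 * n^2 * f * q0 * q1 * ry^3 - 20 * n^2 * f * q0 * y1 * ry^2 * rq - 10 * n^2 * f * q0^2 * y1 * ry^2 - 20 * n^2 * f * y0 * q1 * ry^2 * rq - 30 * n^2 * f * y0 * y1 * ry * rq^2 - 20 * n^2 * f * y0 * q0 * q1 * ry^2 - 60 * n^2 * f * y0 * q0 * y1 * ry * rq - 30 * n^2 * f * y0 * q0^2 * y1 * ry - 30 * n^2 * f * y0^2 * q1 * ry * rq - 30 * n^2 * f * y0^2 * y1 * rq^2 - 30 * n^2 * f * y0^2 * q0 * q1 * ry - 60 * n^2 * f * y0^2 * q0 * y1 * rq - 30 * n^2 * f * y0^2 * q0^2 * y1 - 20 * n^2 * f * y0^3 * q1 * rq - 20 * n^2 * f * y0^3 * q0 * q1 - 3 * n^2 * f^2 * ry^4 * rq^2 - 6 * n^2 * f^2 * q0 * ry^4 * rq - 3 * n^2 * f^2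 * q0^2 * ry^4 - 15 * n^2 * f^2 * y0 * ry^3 * rq^2 - 30 * n^2 * f^2 * y0 * q0 * ry^3 * rq - 15 * n^2 * f^2 * y0 * q0^2 * ry^3 - 30 * n^2 * f^2 * y0^2 * ry^2 * rq^2 - 60 * n^2 * f^2 * y0^2 * q0 * ry^2 * rq - 30 * n^2 * f^2 * y0^2 * q0^2 * ry^2 - 30 * n^2 * f^2 * y0^3 * ry * rq^2 - 60 * n^2 * f^2 * y0^3 * q0 * ry * rq - 30 * n^2 * f^2 * y0^3 * q0^2 * ry - 15 * n^2 * f^2 * y0^4 * rq^2 - 30 * n^2 * f^2 * y0^4 * q0 * rq - 15 * n^2 * f^2 * y0^4 * q0^2 - 2 * n^2 * e * q1 * rz * rq - n^2 * e * z1 * rq^2 - 2 * n^2 * e * q0 * q1 * rz - 2 * n^2 * e * q0 * z1 * rq - n^2 * e * q0^2 * z1 - 2 * n^2 * e * z0 * q1 * rq - 2 * n^2 * e * z0 * q0 * q1 - 3 * n^2 * e * f * ry * rz * rq^2 - 6 * n^2 * e * f * q0 * ry * rz * rq - 3 * n^2 * e * f * q0^2 * ry * rz - 3 * n^2 * e * f * z0 * ry * rq^2 - 6 * n^2 * e * f * z0 * q0 * ry * rq - 3 * n^2 * e * f * z0 * q0^2 * ry - 6 * n^2 * e * f * y0 * rz * rq^2 - 12 * n^2 * e * f * y0 * q0 * rz * rq - 6 * n^2 * e * f * y0 * q0^2 * rz - 6 * n^2 * e * f * y0 * z0 * rq^2 - 12 * n^2 * e * f * y0 * z0 * q0 * rq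 - 6 * n^2 * e * f * y0 * z0 * q0^2 - 3 * / 2 * n^3 * y1 * q1^2 * ry - 3 * n^3 * y1^2 * q1 * rq - 3 * n^3 * q0 * y1^2 * q1 - 3 * n^3 * y0 * y1 * q1^2 - 5 * / 2 * n^3 * f * q1^2 * ry^3 - 20 * n^3 * f * y1 * q1 * ry^2 * rq - 15 * n^3 * f * y1^2 * ry * rq^2 - 20 * n^3 * f * q0 * y1 * q1 * ry^2 - 30 * n^3 * f * q0 * y1^2 * ry * rq - 15 * n^3 * f * q0^2 * y1^2 * ry - 10 * n^3 * f * y0 * q1^2 * ry^2 - 60 * n^3 * f * y0 * y1 * q1 * ry * rq - 30 * n^3 * f * y0 * y1^2 * rq^2 - 60 * n^3 * f * y0 * q0 * y1 * q1 * ry - 60 * n^3 * f * y0 * q0 * y1^2 * rq - 30 * n^3 * f * y0 * q0^2 * y1^2 - 15 * n^3 * f * y0^2 * q1^2 * ry - 60 * n^3 * f * y0^2 * y1 * q1 * rq - 60 * n^3 * f * y0^2 * q0 * y1 * q1 - 10 * n^3 * f * y0^3 * q1^2 - 6 * n^3 * f^2 * q1 * ry^4 * rq - 15 * n^3 * f^2 * y1 * ry^3 * rq^2 - 6 * n^3 * f^2 * q0 * q1 * ry^4 - 30 * n^3 * f^2 * q0 * y1 * ry^3 * rq - 15 * n^3 * f^2 * q0^2 * y1 * ry^3 - 30 * n^3 * f^2 * y0 * q1 * ry^3 * rq - 60 * n^3 * f^2 * y0 * y1 * ry^2 * rq^2 - 30 * n^3 * f^2 * y0 * q0 * q1 * ry^3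 - 120 * n^3 * f^2 * y0 * q0 * y1 * ry^2 * rq - 60 * n^3 * f^2 * y0 * q0^2 * y1 * ry^2 - 60 * n^3 * f^2 * y0^2 * q1 * ry^2 * rq - 90 * n^3 * f^2 * y0^2 * y1 * ry * rq^2 - 60 * n^3 * f^2 * y0^2 * q0 * q1 * ry^2 - 180 * n^3 * f^2 * y0^2 * q0 * y1 * ry * rq - 90 * n^3 * f^2 * y0^2 * q0^2 * y1 * ry - 60 * n^3 * f^2 * y0^3 * q1 * ry * rq - 60 * n^3 * f^2 * y0^3 * y1 * rq^2 - 60 * n^3 * f^2 * y0^3 * q0 * q1 * ry - 120 * n^3 * f^2 * y0^3 * q0 * y1 * rq - 60 * n^3 * f^2 * y0^3 * q0^2 * y1 - 30 * n^3 * f^2 * y0^4 * q1 * rq - 30 * n^3 * f^2 * y0^4 * q0 * q1 - n^3 * e * q1^2 * rz - 2 * n^3 * e * z1 * q1 * rq - 2 * n^3 * e * q0 * z1 * q1 - n^3 * e * z0 * q1^2 - 6 * n^3 * e * f * q1 * ry * rz * rq - 3 * n^3 * e * f * z1 * ry * rq^2 - 6 * n^3 * e * f * y1 * rz * rq^2 - 6 * n^3 * e * f * q0 * q1 * ry * rz - 6 * n^3 * e * f * q0 * z1 * ry * rq - 12 * n^3 * e * f * q0 * y1 * rz * rq - 3 * n^3 * e * f * q0^2 * z1 * ry - 6 * n^3 * e * f * q0^2 * y1 * rz - 6 * n^3 * e * f * z0 * q1 * ry * rq - 6 * n^3 * e * f * z0 * y1 * rq^2 - 6 * n^3 * e * f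 * z0 * q0 * q1 * ry - 12 * n^3 * e * f * z0 * q0 * y1 * rq - 6 * n^3 * e * f * z0 * q0^2 * y1 - 12 * n^3 * e * f * y0 * q1 * rz * rq - 6 * n^3 * e * f * y0 * z1 * rq^2 - 12 * n^3 * e * f * y0 * q0 * q1 * rz - 12 * n^3 * e * f * y0 * q0 * z1 * rq - 6 * n^3 * e * f * y0 * q0^2 * z1 - 12 * n^3 * e * f * y0 * z0 * q1 * rq - 12 * n^3 * e * f * y0 * z0 * q0 * q1 - 3 * / 2 * n^4 * y1^2 * q1^2 - 10 * n^4 * f * y1 * q1^2 * ry^2 - 30 * n^4 * f * y1^2 * q1 * ry * rq - 10 * n^4 * f * y1^3 * rq^2 - 30 * n^4 * f * q0 * y1^2 * q1 * ry - 20 * n^4 * f * q0 * y1^3 * rq - 10 * n^4 * f * q0^2 * y1^3 - 30 * n^4 * f * y0 * y1 * q1^2 * ry - 60 * n^4 * f * y0 * y1^2 * q1 * rq - 60 * n^4 * f * y0 * q0 * y1^2 * q1 - 30 * n^4 * f * y0^2 * y1 * q1^2 - 3 * n^4 * f^2 * q1^2 * ry^4 - 30 * n^4 * f^2 * y1 * q1 * ry^3 * rq - 30 * n^4 * f^2 * y1^2 * ry^2 * rq^2 - 30 * n^4 * f^2 * q0 * y1 * q1 * ry^3 - 60 * n^4 * f^2 * q0 * y1^2 * ry^2 * rq - 30 * n^4 * f^2 * q0^2 * y1^2 * ry^2 - 15 * n^4 * f^2 * y0 * q1^2 * ry^3 - 120 * n^4 * f^2 * y0 * y1 * q1 * ry^2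 * rq - 90 * n^4 * f^2 * y0 * y1^2 * ry * rq^2 - 120 * n^4 * f^2 * y0 * q0 * y1 * q1 * ry^2 - 180 * n^4 * f^2 * y0 * q0 * y1^2 * ry * rq - 90 * n^4 * f^2 * y0 * q0^2 * y1^2 * ry - 30 * n^4 * f^2 * y0^2 * q1^2 * ry^2 - 180 * n^4 * f^2 * y0^2 * y1 * q1 * ry * rq - 90 * n^4 * f^2 * y0^2 * y1^2 * rq^2 - 180 * n^4 * f^2 * y0^2 * q0 * y1 * q1 * ry - 180 * n^4 * f^2 * y0^2 * q0 * y1^2 * rq - 90 * n^4 * f^2 * y0^2 * q0^2 * y1^2 - 30 * n^4 * f^2 * y0^3 * q1^2 * ry - 120 * n^4 * f^2 * y0^3 * y1 * q1 * rq - 120 * n^4 * f^2 * y0^3 * q0 * y1 * q1 - 15 * n^4 * f^2 * y0^4 * q1^2 - n^4 * e * z1 * q1^2 - 3 * n^4 * e * f * q1^2 * ry * rz - 6 * n^4 * e * f * z1 * q1 * ry * rq - 12 * n^4 * e * f * y1 * q1 * rz * rq - 6 * n^4 * e * f * y1 * z1 * rq^2 - 6 * n^4 * e * f * q0 * z1 * q1 * ry - 12 * n^4 * e * f * q0 * y1 * q1 * rz - 12 * n^4 * e * f * q0 * y1 * z1 * rq - 6 * n^4 * e * f * q0^2 * y1 * z1 - 3 * n^4 * e * f * z0 * q1^2 * ry - 12 * n^4 * e * f * z0 * y1 * q1 * rq - 12 * n^4 * e * f * z0 * q0 * y1 * q1 - 6 * n^4 * e * f * y0 * q1^2 * rz -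 12 * n^4 * e * f * y0 * z1 * q1 * rq - 12 * n^4 * e * f * y0 * q0 * z1 * q1 - 6 * n^4 * e * f * y0 * z0 * q1^2 - 15 * n^5 * f * y1^2 * q1^2 * ry - 20 * n^5 * f * y1^3 * q1 * rq - 20 * n^5 * f * q0 * y1^3 * q1 - 30 * n^5 * f * y0 * y1^2 * q1^2 - 15 * n^5 * f^2 * y1 * q1^2 * ry^3 - 60 * n^5 * f^2 * y1^2 * q1 * ry^2 * rq - 30 * n^5 * f^2 * y1^3 * ry * rq^2 - 60 * n^5 * f^2 * q0 * y1^2 * q1 * ry^2 - 60 * n^5 * f^2 * q0 * y1^3 * ry * rq - 30 * n^5 * f^2 * q0^2 * y1^3 * ry - 60 * n^5 * f^2 * y0 * y1 * q1^2 * ry^2 - 180 * n^5 * f^2 * y0 * y1^2 * q1 * ry * rq - 60 * n^5 * f^2 * y0 * y1^3 * rq^2 - 180 * n^5 * f^2 * y0 * q0 * y1^2 * q1 * ry - 120 * n^5 * f^2 * y0 * q0 * y1^3 * rq - 60 * n^5 * f^2 * y0 * q0^2 * y1^3 - 90 * n^5 * f^2 * y0^2 * y1 * q1^2 * ry - 180 * n^5 * f^2 * y0^2 * y1^2 * q1 * rq - 180 * n^5 * f^2 * y0^2 * q0 * y1^2 * q1 - 60 * n^5 * f^2 * y0^3 * y1 * q1^2 - 3 * n^5 * e * f * z1 * q1^2 * ry - 6 * n^5 * e * f * y1 * q1^2 * rz - 12 * n^5 * e * f * y1 * z1 * q1 * rq - 12 * n^5 * e * f * q0 * y1 * z1 *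 q1 - 6 * n^5 * e * f * z0 * y1 * q1^2 - 6 * n^5 * e * f * y0 * z1 * q1^2 - 10 * n^6 * f * y1^3 * q1^2 - 30 * n^6 * f^2 * y1^2 * q1^2 * ry^2 - 60 * n^6 * f^2 * y1^3 * q1 * ry * rq - 15 * n^6 * f^2 * y1^4 * rq^2 - 60 * n^6 * f^2 * q0 * y1^3 * q1 * ry - 30 * n^6 * f^2 * q0 * y1^4 * rq - 15 * n^6 * f^2 * q0^2 * y1^4 - 90 * n^6 * f^2 * y0 * y1^2 * q1^2 * ry - 120 * n^6 * f^2 * y0 * y1^3 * q1 * rq - 120 * n^6 * f^2 * y0 * q0 * y1^3 * q1 - 90 * n^6 * f^2 * y0^2 * y1^2 * q1^2 - 6 * n^6 * e * f * y1 * z1 * q1^2 - 30 * n^7 * f^2 * y1^3 * q1^2 * ry - 30 * n^7 * f^2 * y1^4 * q1 * rq - 30 * n^7 * f^2 * q0 * y1^4 * q1 - 60 * n^7 * f^2 * y0 * y1^3 * q1^2 - 15 * n^8 * f^2 * y1^4 * q1^2).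
Definition qP2 (e f n y0 z0 p0 q0 y1 z1 p1 q1 ry rz rp rq : R) : R := (- n * e * y0 * rq^2 - 2 * n * e * y0 * q0 * rq - n * e * y0 * q0^2 - n^2 * e * y1 * rq^2 - 2 * n^2 * e * q0 * y1 * rq - n^2 * e * q0^2 * y1 - 2 * n^2 * e * y0 * q1 * rq - 2 * n^2 * e * y0 * q0 * q1 - 3 * n^2 * e * f * y0^2 * rq^2 - 6 * n^2 * e * f * y0^2 * q0 * rq - 3 * n^2 * e * f * y0^2 * q0^2 - 2 * n^3 * e * y1 * q1 * rq - 2 * n^3 * e * q0 * y1 * q1 - n^3 * e * y0 * q1^2 - 6 * n^3 * e * f * y0 * y1 * rq^2 - 12 * n^3 * e * f * y0 * q0 * y1 * rq - 6 * n^3 * e * f * y0 * q0^2 * y1 - 6 * n^3 * e * f * y0^2 * q1 * rq - 6 * n^3 * e * f * y0^2 * q0 * q1 - n^4 * e * y1 * q1^2 - 3 * n^4 * e * f * y1^2 * rq^2 - 6 * n^4 * e * f * q0 * y1^2 * rq - 3 * n^4 * e * f * q0^2 * y1^2 - 12 * n^4 * e * f * y0 * y1 * q1 * rq - 12 * n^4 * e * f * y0 * q0 * y1 * q1 - 3 * n^4 * e * f * y0^2 * q1^2 - 6 * n^5 * e * f * y1^2 * q1 * rq - 6 * n^5 * e * f * q0 * y1^2 * q1 - 6 * n^5 * e * f * y0 * y1 * q1^2 - 3 * n^6 * e * f * y1^2 * q1^2).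
Definition qP3 (e f n y0 z0 p0 q0 y1 z1 p1 q1 ry rz rp rq : R) : R := 0.
Definition qP4 (e f n y0 z0 p0 q0 y1 z1 p1 q1 ry rz rp rq : R) : R := (- / 2 * y0^3 * rq - y0^3 * q0 - 3 * / 2 * n * y0^2 * y1 * rq - 3 * n * y0^2 * q0 * y1 - n * y0^3 * q1 - 5 * / 2 * n * f * y0^4 * rq - 5 * n * f * y0^4 * q0 - n * e * y0 * z0 * rq - 2 * n * e * y0 * z0 * q0 - 3 * / 2 * n^2 * y0 * y1^2 * rq - 3 * n^2 * y0 * q0 * y1^2 - 3 * n^2 * y0^2 * y1 * q1 - 10 * n^2 * f * y0^3 * y1 * rq - 20 * n^2 * f * y0^3 * q0 * y1 - 5 * n^2 * f * y0^4 * q1 - 3 * n^2 * f^2 * y0^5 * rq - 6 * n^2 * f^2 * y0^5 * q0 - n^2 * e * z0 * y1 * rq - 2 * n^2 * e * z0 * q0 * y1 - n^2 * e * y0 * z1 * rq - 2 * n^2 * e * y0 * q0 * z1 - 2 * n^2 * e * y0 * z0 * q1 - 3 * n^2 * e * f * y0^2 * z0 * rq - 6 * n^2 * e * f * y0^2 * z0 * q0 - / 2 * n^3 * y1^3 * rq - n^3 * q0 * y1^3 - 3 * n^3 * y0 * y1^2 * q1 - 15 * n^3 * f * y0^2 * y1^2 * rq - 30 * n^3 * f * y0^2 * q0 * y1^2 - 20 * n^3 * f * y0^3 * y1 * q1 - 15 * n^3 * f^2 * y0^4 * y1 * rq - 30 * n^3 * f^2 * y0^4 * q0 * y1 - 6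 * n^3 * f^2 * y0^5 * q1 - n^3 * e * y1 * z1 * rq - 2 * n^3 * e * q0 * y1 * z1 - 2 * n^3 * e * z0 * y1 * q1 - 2 * n^3 * e * y0 * z1 * q1 - 6 * n^3 * e * f * y0 * z0 * y1 * rq - 12 * n^3 * e * f * y0 * z0 * q0 * y1 - 3 * n^3 * e * f * y0^2 * z1 * rq - 6 * n^3 * e * f * y0^2 * q0 * z1 - 6 * n^3 * e * f * y0^2 * z0 * q1 - n^4 * y1^3 * q1 - 10 * n^4 * f * y0 * y1^3 * rq - 20 * n^4 * f * y0 * q0 * y1^3 - 30 * n^4 * f * y0^2 * y1^2 * q1 - 30 * n^4 * f^2 * y0^3 * y1^2 * rq - 60 * n^4 * f^2 * y0^3 * q0 * y1^2 - 30 * n^4 * f^2 * y0^4 * y1 * q1 - 2 * n^4 * e * y1 * z1 * q1 - 3 * n^4 * e * f * z0 * y1^2 * rq - 6 * n^4 * e * f * z0 * q0 * y1^2 - 6 * n^4 * e * f * y0 * y1 * z1 * rq - 12 * n^4 * e * f * y0 * q0 * y1 * z1 - 12 * n^4 * e * f * y0 * z0 * y1 * q1 - 6 * n^4 * e * f * y0^2 * z1 * q1 - 5 * / 2 * n^5 * f * y1^4 * rq - 5 * n^5 * f * q0 * y1^4 - 20 * n^5 * f * y0 * y1^3 * q1 - 30 * n^5 * f^2 * y0^2 * y1^3 * rq - 60 * n^5 * f^2 * y0^2 * q0 * y1^3 - 60 * n^5 * f^2 * y0^3 * y1^2 * q1 - 3 * n^5 * e * f * y1^2 * z1 * rq - 6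 * n^5 * e * f * q0 * y1^2 * z1 - 6 * n^5 * e * f * z0 * y1^2 * q1 - 12 * n^5 * e * f * y0 * y1 * z1 * q1 - 5 * n^6 * f * y1^4 * q1 - 15 * n^6 * f^2 * y0 * y1^4 * rq - 30 * n^6 * f^2 * y0 * q0 * y1^4 - 60 * n^6 * f^2 * y0^2 * y1^3 * q1 - 6 * n^6 * e * f * y1^2 * z1 * q1 - 3 * n^7 * f^2 * y1^5 * rq - 6 * n^7 * f^2 * q0 * y1^5 - 30 * n^7 * f^2 * y0 * y1^4 * q1 - 6 * n^8 * f^2 * y1^5 * q1).
Definition hP (e f n y0 z0 p0 q0 y1 z1 p1 q1 ry rz rp rq : R) : R := (- 3 * / 2 * y0 * q0^2 * y1^2 - 3 * y0^2 * q0 * y1 * q1 - / 2 * y0^3 * q1^2 - 10 * f * y0^3 * q0^2 * y1 - 5 * f * y0^4 * q0 * q1 - 3 * f^2 * y0^5 * q0^2 - e * z0 * q0^2 * y1 - e * y0 * q0^2 * z1 - 2 * e * y0 * z0 * q0 * q1 - 3 * e * f * y0^2 * z0 * q0^2 - / 2 * n * q0^2 * y1^3 - 3 * n * y0 * q0 * y1^2 * q1 - 3 * / 2 * n * y0^2 * y1 * q1^2 - 15 * n * f * y0^2 * q0^2 * y1^2 - 20 * n * f * y0^3 * q0 * y1 * q1 - 5 * / 2 * n * f * y0^4 * q1^2 - 15 * n * f^2 * y0^4 * q0^2 * y1 - 6 * n * f^2 * y0^5 * q0 * q1 - n * e * q0^2 * y1 * z1 - 2 * n * e * z0 * q0 *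 y1 * q1 - 2 * n * e * y0 * q0 * z1 * q1 - n * e * y0 * z0 * q1^2 - 6 * n * e * f * y0 * z0 * q0^2 * y1 - 3 * n * e * f * y0^2 * q0^2 * z1 - 6 * n * e * f * y0^2 * z0 * q0 * q1 - n^2 * q0 * y1^3 * q1 - 3 * / 2 * n^2 * y0 * y1^2 * q1^2 - 10 * n^2 * f * y0 * q0^2 * y1^3 - 30 * n^2 * f * y0^2 * q0 * y1^2 * q1 - 10 * n^2 * f * y0^3 * y1 * q1^2 - 30 * n^2 * f^2 * y0^3 * q0^2 * y1^2 - 30 * n^2 * f^2 * y0^4 * q0 * y1 * q1 - 3 * n^2 * f^2 * y0^5 * q1^2 - 2 * n^2 * e * q0 * y1 * z1 * q1 - n^2 * e * z0 * y1 * q1^2 - n^2 * e * y0 * z1 * q1^2 - 3 * n^2 * e * f * z0 * q0^2 * y1^2 - 6 * n^2 * e * f * y0 * q0^2 * y1 * z1 - 12 * n^2 * e * f * y0 * z0 * q0 * y1 * q1 - 6 * n^2 * e * f * y0^2 * q0 * z1 * q1 - 3 * n^2 * e * f * y0^2 * z0 * q1^2 - / 2 * n^3 * y1^3 * q1^2 - 5 * / 2 * n^3 * f * q0^2 * y1^4 - 20 * n^3 * f * y0 * q0 * y1^3 * q1 - 15 * n^3 * f * y0^2 * y1^2 * q1^2 - 30 * n^3 * f^2 * y0^2 * q0^2 * y1^3 - 60 * n^3 * f^2 * y0^3 * q0 * y1^2 * q1 - 15 * n^3 * f^2 * y0^4 * y1 * q1^2 - n^3 * e * y1 * z1 * q1^2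 - 3 * n^3 * e * f * q0^2 * y1^2 * z1 - 6 * n^3 * e * f * z0 * q0 * y1^2 * q1 - 12 * n^3 * e * f * y0 * q0 * y1 * z1 * q1 - 6 * n^3 * e * f * y0 * z0 * y1 * q1^2 - 3 * n^3 * e * f * y0^2 * z1 * q1^2 - 5 * n^4 * f * q0 * y1^4 * q1 - 10 * n^4 * f * y0 * y1^3 * q1^2 - 15 * n^4 * f^2 * y0 * q0^2 * y1^4 - 60 * n^4 * f^2 * y0^2 * q0 * y1^3 * q1 - 30 * n^4 * f^2 * y0^3 * y1^2 * q1^2 - 6 * n^4 * e * f * q0 * y1^2 * z1 * q1 - 3 * n^4 * e * f * z0 * y1^2 * q1^2 - 6 * n^4 * e * f * y0 * y1 * z1 * q1^2 - 5 * / 2 * n^5 * f * y1^4 * q1^2 - 3 * n^5 * f^2 * q0^2 * y1^5 - 30 * n^5 * f^2 * y0 * q0 * y1^4 * q1 - 30 * n^5 * f^2 * y0^2 * y1^3 * q1^2 - 3 * n^5 * e * f * y1^2 * z1 * q1^2 - 6 * n^6 * f^2 * q0 * y1^5 * q1 - 15 * n^6 * f^2 * y0 * y1^4 * q1^2 - 3 * n^7 * f^2 * y1^5 * q1^2).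
Definition qQ1 (e f n y0 z0 p0 q0 y1 z1 p1 q1 ry rz rp rq : R) : R := (- / 2 * n * e * ry * rq^2 - n * e * q0 * ry * rq - / 2 * n * e * q0^2 * ry - n * e * y0 * rq^2 - 2 * n * e * y0 * q0 * rq - n * e * y0 * q0^2 - n^2 * e * q1 * ry * rq - n^2 * e * y1 * rq^2 - n^2 * e * q0 * q1 * ry - 2 * n^2 * e * q0 * y1 * rq - n^2 * e * q0^2 * y1 - 2 * n^2 * e * y0 * q1 * rq - 2 * n^2 * e * y0 * q0 * q1 - n^2 * e * f * ry^2 * rq^2 - 2 * n^2 * e * f * q0 * ry^2 * rq - n^2 * e * f * q0^2 * ry^2 - 3 * n^2 * e * f * y0 * ry * rq^2 - 6 * n^2 * e * f * y0 * q0 * ry * rq - 3 * n^2 * e * f * y0 * q0^2 * ry - 3 * n^2 * e * f * y0^2 * rq^2 - 6 * n^2 * e * f * y0^2 * q0 * rq - 3 * n^2 * e * f * y0^2 * q0^2 - / 2 * n^3 * e * q1^2 * ry - 2 * n^3 * e * y1 * q1 * rq - 2 * n^3 * e * q0 * y1 * q1 - n^3 * e * y0 * q1^2 - 2 * n^3 * e * f * q1 * ry^2 * rq - 3 * n^3 * e * f * y1 * ry * rq^2 - 2 * n^3 * e * f * q0 * q1 * ry^2 - 6 * n^3 * e * f * q0 * y1 * ry * rq - 3 * n^3 * e * f * q0^2 * y1 * ry - 6 * n^3 * e * f * y0 * q1 * ry * rq - 6 * n^3 * e * f * y0 * y1 * rq^2 - 6 * n^3 * e * f * y0 * q0 * q1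 * ry - 12 * n^3 * e * f * y0 * q0 * y1 * rq - 6 * n^3 * e * f * y0 * q0^2 * y1 - 6 * n^3 * e * f * y0^2 * q1 * rq - 6 * n^3 * e * f * y0^2 * q0 * q1 - n^4 * e * y1 * q1^2 - n^4 * e * f * q1^2 * ry^2 - 6 * n^4 * e * f * y1 * q1 * ry * rq - 3 * n^4 * e * f * y1^2 * rq^2 - 6 * n^4 * e * f * q0 * y1 * q1 * ry - 6 * n^4 * e * f * q0 * y1^2 * rq - 3 * n^4 * e * f * q0^2 * y1^2 - 3 * n^4 * e * f * y0 * q1^2 * ry - 12 * n^4 * e * f * y0 * y1 * q1 * rq - 12 * n^4 * e * f * y0 * q0 * y1 * q1 - 3 * n^4 * e * f * y0^2 * q1^2 - 3 * n^5 * e * f * y1 * q1^2 * ry - 6 * n^5 * e * f * y1^2 * q1 * rq - 6 * n^5 * e * f * q0 * y1^2 * q1 - 6 * n^5 * e * f * y0 * y1 * q1^2 - 3 * n^6 * e * f * y1^2 * q1^2).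
Definition qQ2 (e f n y0 z0 p0 q0 y1 z1 p1 q1 ry rz rp rq : R) : R := (- n^2 * e^2 * rq^2 - 2 * n^2 * e^2 * q0 * rq - n^2 * e^2 * q0^2 - 2 * n^3 * e^2 * q1 * rq - 2 * n^3 * e^2 * q0 * q1 - n^4 * e^2 * q1^2).
Definition qQ3 (e f n y0 z0 p0 q0 y1 z1 p1 q1 ry rz rp rq : R) : R := 0.
Definition qQ4 (e f n y0 z0 p0 q0 y1 z1 p1 q1 ry rz rp rq : R) : R := (- / 2 * n * e * y0^2 * rq - n * e * y0^2 * q0 - n^2 * e * y0 * y1 * rq - 2 * n^2 * e * y0 * q0 * y1 - n^2 * e * y0^2 * q1 - n^2 * e * f * y0^3 * rq - 2 * n^2 * e * f * y0^3 * q0 - n^2 * e^2 * z0 * rq - 2 * n^2 * e^2 * z0 * q0 - / 2 * n^3 * e * y1^2 * rq - n^3 * e * q0 * y1^2 - 2 * n^3 * e * y0 * y1 * q1 - 3 * n^3 * e * f * y0^2 * y1 * rq - 6 * n^3 * e * f * y0^2 * q0 * y1 - 2 * n^3 * e * f * y0^3 * q1 - n^3 * e^2 * z1 * rq - 2 * n^3 * e^2 * q0 * z1 - 2 * n^3 * e^2 * z0 * q1 - n^4 * e * y1^2 * q1 - 3 * n^4 * e * f * y0 * y1^2 * rq - 6 * n^4 * e * f * y0 * q0 * y1^2 - 6 * n^4 * e * f * y0^2 * y1 * q1 - 2 * n^4 * e^2 * z1 * q1 - n^5 * e * f * y1^3 * rq - 2 * n^5 * e * f * q0 * y1^3 - 6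 * n^5 * e * f * y0 * y1^2 * q1 - 2 * n^6 * e * f * y1^3 * q1).
Definition hQ (e f n y0 z0 p0 q0 y1 z1 p1 q1 ry rz rp rq : R) : R := (- e * y0 * q0^2 * y1 - e * y0^2 * q0 * q1 - e * f * y0^3 * q0^2 - e^2 * z0 * q0^2 - / 2 * n * e * q0^2 * y1^2 - 2 * n * e * y0 * q0 * y1 * q1 - / 2 * n * e * y0^2 * q1^2 - 3 * n * e * f * y0^2 * q0^2 * y1 - 2 * n * e * f * y0^3 * q0 * q1 - n * e^2 * q0^2 * z1 - 2 * n * e^2 * z0 * q0 * q1 - n^2 * e * q0 * y1^2 * q1 - n^2 * e * y0 * y1 * q1^2 - 3 * n^2 * e * f * y0 * q0^2 * y1^2 - 6 * n^2 * e * f * y0^2 * q0 * y1 * q1 - n^2 * e * f * y0^3 * q1^2 - 2 * n^2 * e^2 * q0 * z1 * q1 - n^2 * e^2 * z0 * q1^2 - / 2 * n^3 * e * y1^2 * q1^2 - n^3 * e * f * q0^2 * y1^3 - 6 * n^3 * e * f * y0 * q0 * y1^2 * q1 - 3 * n^3 * e * f * y0^2 * y1 * q1^2 - n^3 * e^2 * z1 * q1^2 - 2 * n^4 * e * f * q0 * y1^3 * q1 - 3 * n^4 * e * f * y0 * y1^2 * q1^2 - n^5 * e * f * y1^3 * q1^2).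
Definition GZf (e f n y0 z0 p0 q0 y1 z1 p1 q1 ry rz rp rq : R) : R := ry * qZ1 e f n y0 z0 p0 q0 y1 z1 p1 q1 ry rz rp rq + rz * qZ2 e f n y0 z0 p0 q0 y1 z1 p1 q1 ry rz rp rq + rp * qZ3 e f n y0 z0 p0 q0 y1 z1 p1 q1 ry rz rp rq + rq * qZ4 e f n y0 z0 p0 q0 y1 z1 p1 q1 ry rz rp rq + n ^ 2 * hZ e f n y0 z0 p0 q0 y1 z1 p1 q1 ry rz rp rq.
Lemma idZ (e f n y0 z0 p0 q0 y1 z1 p1 q1 ry rz rp rq : R) :
  GZf e f n y0 z0 p0 q0 y1 z1 p1 q1 ry rz rp rq =
  (q0 + n * q1 + rq) * ((y0 + n * y1 + ry)^2 * / 2 + n * (e * (z0 + n * z1 + rz) + f * (y0 + n * y1 + ry)^3))^2 - (/ 4 * q0 * y0^4 + n * (/ 4 * q1 * y0 ^ 4 + q0 * (y0 ^ 3 * y1 + e * z0 * y0 ^ 2 + f * y0 ^ 5))).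
Proof. unfold GZf, qZ1, qZ2, qZ3, qZ4, hZ. field. Qed.

Definition GPf (e f n y0 z0 p0 q0 y1 z1 p1 q1 ry rz rp rq : R) : R := ry * qP1 e f n y0 z0 p0 q0 y1 z1 p1 q1 ry rz rp rq + rz * qP2 e f n y0 z0 p0 q0 y1 z1 p1 q1 ry rz rp rq + rp * qP3 e f n y0 z0 p0 q0 y1 z1 p1 q1 ry rz rp rq + rq * qP4 e f n y0 z0 p0 q0 y1 z1 p1 q1 ry rz rp rq + n ^ 2 * hP e f n y0 z0 p0 q0 y1 z1 p1 q1 ry rz rp rq.
Lemma idP (e f n y0 z0 p0 q0 y1 z1 p1 q1 ry rz rp rq : R) :
  GPf e f n y0 z0 p0 q0 y1 z1 p1 q1 ry rz rp rq =
  - (q0 + n * q1 + rq)^2 * ((y0 + n * y1 + ry)^2 * / 2 + n * (e * (z0 + n * z1 + rz) + f * (y0 + n * y1 + ry)^3)) * ((y0 + n * y1 + ry) + 3 * n * f * (y0 + n * y1 + ry)^2) - (- / 2 * q0 ^ 2 * y0 ^ 3 + n * (- q0 * q1 * y0 ^ 3 - q0 ^ 2 * (3 / 2 * y0 ^ 2 * y1 + e * z0 * y0 + 5 / 2 * f * y0 ^ 4))).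
Proof. unfold GPf, qP1, qP2, qP3, qP4, hP. field. Qed.

Definition GQf (e f n y0 z0 p0 q0 y1 z1 p1 q1 ry rz rp rq : R) : R := ry * qQ1 e f n y0 z0 p0 q0 y1 z1 p1 q1 ry rz rp rq + rz * qQ2 e f n y0 z0 p0 q0 y1 z1 p1 q1 ry rz rp rq + rp * qQ3 e f n y0 z0 p0 q0 y1 z1 p1 q1 ry rz rp rq + rq * qQ4 e f n y0 z0 p0 q0 y1 z1 p1 q1 ry rz rp rq + n ^ 2 * hQ e f n y0 z0 p0 q0 y1 z1 p1 q1 ry rz rp rq.
Lemma idQ (e f n y0 z0 p0 q0 y1 z1 p1 q1 ry rz rp rq : R) :
  GQf e f n y0 z0 p0 q0 y1 z1 p1 q1 ry rz rp rq =
  - n * e * (q0 + n * q1 + rq)^2 * ((y0 + n * y1 + ry)^2 * / 2 + n * (e * (z0 + n * z1 + rz) + f * (y0 + n * y1 + ry)^3)) - (0 + n * (- / 2 * q0 ^ 2 * e * y0 ^ 2)).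
Proof. unfold GQf, qQ1, qQ2, qQ3, qQ4, hQ. field. Qed.

Lemma b_qZ1 (e f B : R) : exists C, forall n y0 z0 p0 q0 y1 z1 p1 q1 ry rz rp rq : R,
  Rabs n <= 1 -> Rabs y0 <= B -> Rabs z0 <= B -> Rabs p0 <= B -> Rabs q0 <= B -> Rabs y1 <= B -> Rabs z1 <= B -> Rabs p1 <= B -> Rabs q1 <= B -> Rabs ry <= 1 -> Rabs rz <= 1 -> Rabs rp <= 1 -> Rabs rq <= 1 -> Rabs (qZ1 e f n y0 z0 p0 q0 y1 z1 p1 q1 ry rz rp rq) <= C.
Proof. eexists. intros. unfold qZ1. bnd. Qed.

Lemma b_qZ2 (e f B : R) : exists C, forall n y0 z0 p0 q0 y1 z1 p1 q1 ry rz rp rq : R,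
  Rabs n <= 1 -> Rabs y0 <= B -> Rabs z0 <= B -> Rabs p0 <= B -> Rabs q0 <= B -> Rabs y1 <= B -> Rabs z1 <= B -> Rabs p1 <= B -> Rabs q1 <= B -> Rabs ry <= 1 -> Rabs rz <= 1 -> Rabs rp <= 1 -> Rabs rq <= 1 -> Rabs (qZ2 e f n y0 z0 p0 q0 y1 z1 p1 q1 ry rz rp rq) <= C.
Proof. eexists. intros. unfold qZ2. bnd. Qed.

Lemma b_qZ3 (e f B : R) : exists C, forall n y0 z0 p0 q0 y1 z1 p1 q1 ry rz rp rq : R,
  Rabs n <= 1 -> Rabs y0 <= B -> Rabs z0 <= B -> Rabs p0 <= B -> Rabs q0 <= B -> Rabs y1 <= B -> Rabs z1 <= B -> Rabs p1 <= B -> Rabs q1 <= B -> Rabs ry <= 1 -> Rabs rz <= 1 -> Rabs rp <= 1 -> Rabs rq <= 1 -> Rabs (qZ3 e f n y0 z0 p0 q0 y1 z1 p1 q1 ry rz rp rq) <= C.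
Proof. eexists. intros. unfold qZ3. bnd. Qed.

Lemma b_qZ4 (e f B : R) : exists C, forall n y0 z0 p0 q0 y1 z1 p1 q1 ry rz rp rq : R,
  Rabs n <= 1 -> Rabs y0 <= B -> Rabs z0 <= B -> Rabs p0 <= B -> Rabs q0 <= B -> Rabs y1 <= B -> Rabs z1 <= B -> Rabs p1 <= B -> Rabs q1 <= B -> Rabs ry <= 1 -> Rabs rz <= 1 -> Rabs rp <= 1 -> Rabs rq <= 1 -> Rabs (qZ4 e f n y0 z0 p0 q0 y1 z1 p1 q1 ry rz rp rq) <= C.
Proof. eexists. intros. unfold qZ4. bnd. Qed.

Lemma b_hZ (e f B : R) : exists C, forall n y0 z0 p0 q0 y1 z1 p1 q1 ry rz rp rq : R,
  Rabs n <= 1 -> Rabs y0 <= B -> Rabs z0 <= B -> Rabs p0 <= B -> Rabs q0 <= B -> Rabs y1 <= B -> Rabs z1 <= B -> Rabs p1 <= B -> Rabs q1 <= B -> Rabs ry <= 1 -> Rabs rz <= 1 -> Rabs rp <= 1 -> Rabs rq <= 1 -> Rabs (hZ e f n y0 z0 p0 q0 y1 z1 p1 q1 ry rz rp rq) <= C.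
Proof. eexists. intros. unfold hZ. bnd. Qed.

Lemma b_qP1 (e f B : R) : exists C, forall n y0 z0 p0 q0 y1 z1 p1 q1 ry rz rp rq : R,
  Rabs n <= 1 -> Rabs y0 <= B -> Rabs z0 <= B -> Rabs p0 <= B -> Rabs q0 <= B -> Rabs y1 <= B -> Rabs z1 <= B -> Rabs p1 <= B -> Rabs q1 <= B -> Rabs ry <= 1 -> Rabs rz <= 1 -> Rabs rp <= 1 -> Rabs rq <= 1 -> Rabs (qP1 e f n y0 z0 p0 q0 y1 z1 p1 q1 ry rz rp rq) <= C.
Proof. eexists. intros. unfold qP1. bnd. Qed.

Lemma b_qP2 (e f B : R) : exists C, forall n y0 z0 p0 q0 y1 z1 p1 q1 ry rz rp rq : R,
  Rabs n <= 1 -> Rabs y0 <= B -> Rabs z0 <= B -> Rabs p0 <= B -> Rabs q0 <= B -> Rabs y1 <= B -> Rabs z1 <= B -> Rabs p1 <= B -> Rabs q1 <= B -> Rabs ry <= 1 -> Rabs rz <= 1 -> Rabs rp <= 1 -> Rabs rq <= 1 -> Rabs (qP2 e f n y0 z0 p0 q0 y1 z1 p1 q1 ry rz rp rq) <= C.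
Proof. eexists. intros. unfold qP2. bnd. Qed.

Lemma b_qP3 (e f B : R) : exists C, forall n y0 z0 p0 q0 y1 z1 p1 q1 ry rz rp rq : R,
  Rabs n <= 1 -> Rabs y0 <= B -> Rabs z0 <= B -> Rabs p0 <= B -> Rabs q0 <= B -> Rabs y1 <= B -> Rabs z1 <= B -> Rabs p1 <= B -> Rabs q1 <= B -> Rabs ry <= 1 -> Rabs rz <= 1 -> Rabs rp <= 1 -> Rabs rq <= 1 -> Rabs (qP3 e f n y0 z0 p0 q0 y1 z1 p1 q1 ry rz rp rq) <= C.
Proof. eexists. intros. unfold qP3. bnd. Qed.

Lemma b_qP4 (e f B : R) : exists C, forall n y0 z0 p0 q0 y1 z1 p1 q1 ry rz rp rq : R,
  Rabs n <= 1 -> Rabs y0 <= B -> Rabs z0 <= B -> Rabs p0 <= B -> Rabs q0 <= B -> Rabs y1 <= B -> Rabs z1 <= B -> Rabs p1 <= B -> Rabs q1 <= B -> Rabs ry <= 1 -> Rabs rz <= 1 -> Rabs rp <= 1 -> Rabs rq <= 1 -> Rabs (qP4 e f n y0 z0 p0 q0 y1 z1 p1 q1 ry rz rp rq) <= C.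
Proof. eexists. intros. unfold qP4. bnd. Qed.

Lemma b_hP (e f B : R) : exists C, forall n y0 z0 p0 q0 y1 z1 p1 q1 ry rz rp rq : R,
  Rabs n <= 1 -> Rabs y0 <= B -> Rabs z0 <= B -> Rabs p0 <= B -> Rabs q0 <= B -> Rabs y1 <= B -> Rabs z1 <= B -> Rabs p1 <= B -> Rabs q1 <= B -> Rabs ry <= 1 -> Rabs rz <= 1 -> Rabs rp <= 1 -> Rabs rq <= 1 -> Rabs (hP e f n y0 z0 p0 q0 y1 z1 p1 q1 ry rz rp rq) <= C.
Proof. eexists. intros. unfold hP. bnd. Qed.

Lemma b_qQ1 (e f B : R) : exists C, forall n y0 z0 p0 q0 y1 z1 p1 q1 ry rz rp rq : R,
  Rabs n <= 1 -> Rabs y0 <= B -> Rabs z0 <= B -> Rabs p0 <= B -> Rabs q0 <= B -> Rabs y1 <= B -> Rabs z1 <= B -> Rabs p1 <= B -> Rabs q1 <= B -> Rabs ry <= 1 -> Rabs rz <= 1 -> Rabs rp <= 1 -> Rabs rq <= 1 -> Rabs (qQ1 e f n y0 z0 p0 q0 y1 z1 p1 q1 ry rz rp rq) <= C.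
Proof. eexists. intros. unfold qQ1. bnd. Qed.

Lemma b_qQ2 (e f B : R) : exists C, forall n y0 z0 p0 q0 y1 z1 p1 q1 ry rz rp rq : R,
  Rabs n <= 1 -> Rabs y0 <= B -> Rabs z0 <= B -> Rabs p0 <= B -> Rabs q0 <= B -> Rabs y1 <= B -> Rabs z1 <= B -> Rabs p1 <= B -> Rabs q1 <= B -> Rabs ry <= 1 -> Rabs rz <= 1 -> Rabs rp <= 1 -> Rabs rq <= 1 -> Rabs (qQ2 e f n y0 z0 p0 q0 y1 z1 p1 q1 ry rz rp rq) <= C.
Proof. eexists. intros. unfold qQ2. bnd. Qed.

Lemma b_qQ3 (e f B : R) : exists C, forall n y0 z0 p0 q0 y1 z1 p1 q1 ry rz rp rq : R,
  Rabs n <= 1 -> Rabs y0 <= B -> Rabs z0 <= B -> Rabs p0 <= B -> Rabs q0 <= B -> Rabs y1 <= B -> Rabs z1 <= B -> Rabs p1 <= B -> Rabs q1 <= B -> Rabs ry <= 1 -> Rabs rz <= 1 -> Rabs rp <= 1 -> Rabs rq <= 1 -> Rabs (qQ3 e f n y0 z0 p0 q0 y1 z1 p1 q1 ry rz rp rq) <= C.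
Proof. eexists. intros. unfold qQ3. bnd. Qed.

Lemma b_qQ4 (e f B : R) : exists C, forall n y0 z0 p0 q0 y1 z1 p1 q1 ry rz rp rq : R,
  Rabs n <= 1 -> Rabs y0 <= B -> Rabs z0 <= B -> Rabs p0 <= B -> Rabs q0 <= B -> Rabs y1 <= B -> Rabs z1 <= B -> Rabs p1 <= B -> Rabs q1 <= B -> Rabs ry <= 1 -> Rabs rz <= 1 -> Rabs rp <= 1 -> Rabs rq <= 1 -> Rabs (qQ4 e f n y0 z0 p0 q0 y1 z1 p1 q1 ry rz rp rq) <= C.
Proof. eexists. intros. unfold qQ4. bnd. Qed.

Lemma b_hQ (e f B : R) : exists C, forall n y0 z0 p0 q0 y1 z1 p1 q1 ry rz rp rq : R,
  Rabs n <= 1 -> Rabs y0 <= B -> Rabs z0 <= B -> Rabs p0 <= B -> Rabs q0 <= B -> Rabs y1 <= B -> Rabs z1 <= B -> Rabs p1 <= B -> Rabs q1 <= B -> Rabs ry <= 1 -> Rabs rz <= 1 -> Rabs rp <= 1 -> Rabs rq <= 1 -> Rabs (hQ e f n y0 z0 p0 q0 y1 z1 p1 q1 ry rz rp rq) <= C.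
Proof. eexists. intros. unfold hQ. bnd. Qed.

Lemma b_all (e f B : R) : exists C, 1 <= C /\ forall n y0 z0 p0 q0 y1 z1 p1 q1 ry rz rp rq : R,
  Rabs n <= 1 -> Rabs y0 <= B -> Rabs z0 <= B -> Rabs p0 <= B -> Rabs q0 <= B -> Rabs y1 <= B -> Rabs z1 <= B -> Rabs p1 <= B -> Rabs q1 <= B -> Rabs ry <= 1 -> Rabs rz <= 1 -> Rabs rp <= 1 -> Rabs rq <= 1 ->
  Rabs (qZ1 e f n y0 z0 p0 q0 y1 z1 p1 q1 ry rz rp rq) <= C /\ Rabs (qZ2 e f n y0 z0 p0 q0 y1 z1 p1 q1 ry rz rp rq) <= C /\ Rabs (qZ3 e f n y0 z0 p0 q0 y1 z1 p1 q1 ry rz rp rq) <= C /\ Rabs (qZ4 e f n y0 z0 p0 q0 y1 z1 p1 q1 ry rz rp rq) <= C /\ Rabs (hZ e f n y0 z0 p0 q0 y1 z1 p1 q1 ry rz rp rq) <= C /\ Rabs (qP1 e f n y0 z0 p0 q0 y1 z1 p1 q1 ry rz rp rq) <= C /\ Rabs (qP2 e f n y0 z0 p0 q0 y1 z1 p1 q1 ry rz rp rq) <= C /\ Rabs (qP3 e f n y0 z0 p0 q0 y1 z1 p1 q1 ry rz rp rq) <= C /\ Rabs (qP4 e f n y0 z0 p0 q0 y1 z1 p1 q1 ry rz rp rq) <= C /\ Rabs (hP e f n y0 z0 p0 q0 y1 z1 p1 q1 ry rz rp rq) <= C /\ Rabs (qQ1 e f n y0 z0 p0 q0 y1 z1 p1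 q1 ry rz rp rq) <= C /\ Rabs (qQ2 e f n y0 z0 p0 q0 y1 z1 p1 q1 ry rz rp rq) <= C /\ Rabs (qQ3 e f n y0 z0 p0 q0 y1 z1 p1 q1 ry rz rp rq) <= C /\ Rabs (qQ4 e f n y0 z0 p0 q0 y1 z1 p1 q1 ry rz rp rq) <= C /\ Rabs (hQ e f n y0 z0 p0 q0 y1 z1 p1 q1 ry rz rp rq) <= C.
Proof.

  destruct (b_qZ1 e f B) as [C0 H0].
  destruct (b_qZ2 e f B) as [C1 H1].
  destruct (b_qZ3 e f B) as [C2 H2].
  destruct (b_qZ4 e f B) as [C3 H3].
  destruct (b_hZ e f B) as [C4 H4].
  destruct (b_qP1 e f B) as [C5 H5].
  destruct (b_qP2 e f B) as [C6 H6].
  destruct (b_qP3 e f B) as [C7 H7].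
  destruct (b_qP4 e f B) as [C8 H8].
  destruct (b_hP e f B) as [C9 H9].
  destruct (b_qQ1 e f B) as [C10 H10].
  destruct (b_qQ2 e f B) as [C11 H11].
  destruct (b_qQ3 e f B) as [C12 H12].
  destruct (b_qQ4 e f B) as [C13 H13].
  destruct (b_hQ e f B) as [C14 H14].
  exists (1 + Rabs C0 + Rabs C1 + Rabs C2 + Rabs C3 + Rabs C4 + Rabs C5 + Rabs C6 + Rabs C7 + Rabs C8 + Rabs C9 + Rabs C10 + Rabs C11 + Rabs C12 + Rabs C13 + Rabs C14). split. pose proof (Rabs_pos C0). pose proof (Rabs_pos C1). pose proof (Rabs_pos C2). pose proof (Rabs_pos C3). pose proof (Rabs_pos C4). pose proof (Rabs_pos C5). pose proof (Rabs_pos C6). pose proof (Rabs_pos C7). pose proof (Rabs_pos C8). pose proof (Rabs_pos C9). pose proof (Rabs_pos C10). pose proof (Rabs_pos C11). pose proof (Rabs_pos C12). pose proof (Rabs_pos C13). pose proof (Rabs_pos C14). lra.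
  intros. pose proof (Rabs_pos C0). pose proof (Rle_abs C0). pose proof (Rabs_pos C1). pose proof (Rle_abs C1). pose proof (Rabs_pos C2). pose proof (Rle_abs C2). pose proof (Rabs_pos C3). pose proof (Rle_abs C3). pose proof (Rabs_pos C4). pose proof (Rle_abs C4). pose proof (Rabs_pos C5). pose proof (Rle_abs C5). pose proof (Rabs_pos C6). pose proof (Rle_abs C6). pose proof (Rabs_pos C7). pose proof (Rle_abs C7). pose proof (Rabs_pos C8). pose proof (Rle_abs C8). pose proof (Rabs_pos C9). pose proof (Rle_abs C9). pose proof (Rabs_pos C10). pose proof (Rle_abs C10). pose proof (Rabs_pos C11). pose proof (Rle_abs C11). pose proof (Rabs_pos C12). pose proof (Rle_abs C12). pose proof (Rabs_pos C13). pose proof (Rle_abs C13). pose proof (Rabs_pos C14). pose proof (Rle_abs C14).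
  repeat split; [ specialize (H0 n y0 z0 p0 q0 y1 z1 p1 q1 ry rz rp rq ltac:(auto) ltac:(auto) ltac:(auto) ltac:(auto) ltac:(auto) ltac:(auto) ltac:(auto) ltac:(auto) ltac:(auto) ltac:(auto) ltac:(auto) ltac:(auto) ltac:(auto)); lra | specialize (H1 n y0 z0 p0 q0 y1 z1 p1 q1 ry rz rp rq ltac:(auto) ltac:(auto) ltac:(auto) ltac:(auto) ltac:(auto) ltac:(auto) ltac:(auto) ltac:(auto) ltac:(auto) ltac:(auto) ltac:(auto) ltac:(auto) ltac:(auto)); lra | specialize (H2 n y0 z0 p0 q0 y1 z1 p1 q1 ry rz rp rq ltac:(auto) ltac:(auto) ltac:(auto) ltac:(auto) ltac:(auto) ltac:(auto) ltac:(auto) ltac:(auto) ltac:(auto) ltac:(auto) ltac:(auto) ltac:(auto) ltac:(auto)); lra | specialize (H3 n y0 z0 p0 q0 y1 z1 p1 q1 ry rz rp rq ltac:(auto) ltac:(auto) ltac:(auto) ltac:(auto) ltac:(auto) ltac:(auto) ltac:(auto) ltac:(auto) ltac:(auto) ltac:(auto) ltac:(auto) ltac:(auto) ltac:(auto)); lra | specialize (H4 n y0 z0 p0 q0 y1 z1 p1 q1 ry rz rp rq ltac:(auto) ltac:(auto) ltac:(auto) ltac:(auto) ltac:(auto) ltac:(auto) ltac:(auto) ltac:(auto) ltac:(auto) ltac:(auto) ltac:(auto) ltac:(auto) ltac:(auto)); lra | specialize (H5 n y0 z0 p0 q0 y1 z1 p1 q1 ry rz rp rq ltac:(auto) ltac:(auto)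 ltac:(auto) ltac:(auto) ltac:(auto) ltac:(auto) ltac:(auto) ltac:(auto) ltac:(auto) ltac:(auto) ltac:(auto) ltac:(auto) ltac:(auto)); lra | specialize (H6 n y0 z0 p0 q0 y1 z1 p1 q1 ry rz rp rq ltac:(auto) ltac:(auto) ltac:(auto) ltac:(auto) ltac:(auto) ltac:(auto) ltac:(auto) ltac:(auto) ltac:(auto) ltac:(auto) ltac:(auto) ltac:(auto) ltac:(auto)); lra | specialize (H7 n y0 z0 p0 q0 y1 z1 p1 q1 ry rz rp rq ltac:(auto) ltac:(auto) ltac:(auto) ltac:(auto) ltac:(auto) ltac:(auto) ltac:(auto) ltac:(auto) ltac:(auto) ltac:(auto) ltac:(auto) ltac:(auto) ltac:(auto)); lra | specialize (H8 n y0 z0 p0 q0 y1 z1 p1 q1 ry rz rp rq ltac:(auto) ltac:(auto) ltac:(auto) ltac:(auto) ltac:(auto) ltac:(auto) ltac:(auto) ltac:(auto) ltac:(auto) ltac:(auto) ltac:(auto) ltac:(auto) ltac:(auto)); lra | specialize (H9 n y0 z0 p0 q0 y1 z1 p1 q1 ry rz rp rq ltac:(auto) ltac:(auto) ltac:(auto) ltac:(auto) ltac:(auto) ltac:(auto) ltac:(auto) ltac:(auto) ltac:(auto) ltac:(auto) ltac:(auto) ltac:(auto) ltac:(auto)); lra | specialize (H10 n y0 z0 p0 q0 y1 z1 p1 q1 ry rz rp rq ltac:(auto) ltac:(auto) ltac:(auto) ltac:(auto) ltac:(auto) ltac:(auto) ltac:(auto) ltac:(auto) ltac:(auto) ltac:(auto)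 ltac:(auto) ltac:(auto) ltac:(auto)); lra | specialize (H11 n y0 z0 p0 q0 y1 z1 p1 q1 ry rz rp rq ltac:(auto) ltac:(auto) ltac:(auto) ltac:(auto) ltac:(auto) ltac:(auto) ltac:(auto) ltac:(auto) ltac:(auto) ltac:(auto) ltac:(auto) ltac:(auto) ltac:(auto)); lra | specialize (H12 n y0 z0 p0 q0 y1 z1 p1 q1 ry rz rp rq ltac:(auto) ltac:(auto) ltac:(auto) ltac:(auto) ltac:(auto) ltac:(auto) ltac:(auto) ltac:(auto) ltac:(auto) ltac:(auto) ltac:(auto) ltac:(auto) ltac:(auto)); lra | specialize (H13 n y0 z0 p0 q0 y1 z1 p1 q1 ry rz rp rq ltac:(auto) ltac:(auto) ltac:(auto) ltac:(auto) ltac:(auto) ltac:(auto) ltac:(auto) ltac:(auto) ltac:(auto) ltac:(auto) ltac:(auto) ltac:(auto) ltac:(auto)); lra | specialize (H14 n y0 z0 p0 q0 y1 z1 p1 q1 ry rz rp rq ltac:(auto) ltac:(auto) ltac:(auto) ltac:(auto) ltac:(auto) ltac:(auto) ltac:(auto) ltac:(auto) ltac:(auto) ltac:(auto) ltac:(auto) ltac:(auto) ltac:(auto)); lra ].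
Qed.

Lemma b_G1 (ry rz rp rq n a1 a2 a3 a4 h C : R) : 0 <= C -> Rabs a1 <= C -> Rabs a2 <= C -> Rabs a3 <= C -> Rabs a4 <= C -> Rabs h <= C ->
  Rabs (ry * a1 + rz * a2 + rp * a3 + rq * a4 + n ^ 2 * h) <= C * (Rabs ry + Rabs rz + Rabs rp + Rabs rq) + C * n ^ 2.
Proof.
  intros. assert (Rabs (n^2) = n^2) by (apply Rabs_right; apply Rle_ge; apply pow2_ge_0).
  assert (Rabs (ry*a1) <= Rabs ry * C) by (rewrite Rabs_mult; apply Rmult_le_compat_l; auto; apply Rabs_pos).
  assert (Rabs (rz*a2) <= Rabs rz * C) by (rewrite Rabs_mult; apply Rmult_le_compat_l; auto; apply Rabs_pos).
  assert (Rabs (rp*a3) <= Rabs rp * C) by (rewrite Rabs_mult; apply Rmult_le_compat_l; auto; apply Rabs_pos).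
  assert (Rabs (rq*a4) <= Rabs rq * C) by (rewrite Rabs_mult; apply Rmult_le_compat_l; auto; apply Rabs_pos).
  assert (Rabs (n^2*h) <= n^2 * C) by (rewrite Rabs_mult, H5; apply Rmult_le_compat_l; auto; apply pow2_ge_0).
  pose proof (Rabs_triang (ry*a1) (rz*a2)). pose proof (Rabs_triang (ry*a1+rz*a2) (rp*a3)). pose proof (Rabs_triang (ry*a1+rz*a2+rp*a3) (rq*a4)). pose proof (Rabs_triang (ry*a1+rz*a2+rp*a3+rq*a4) (n^2*h)). lra.
Qed.

Lemma b_G (e f B : R) : exists C, 1 <= C /\ forall n y0 z0 p0 q0 y1 z1 p1 q1 ry rz rp rq : R,
  Rabs n <= 1 -> Rabs y0 <= B -> Rabs z0 <= B -> Rabs p0 <= B -> Rabs q0 <= B -> Rabs y1 <= B -> Rabs z1 <= B -> Rabs p1 <= B -> Rabs q1 <= B -> Rabs ry <= 1 -> Rabs rz <= 1 -> Rabs rp <= 1 -> Rabs rq <= 1 ->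
  Rabs (GZf e f n y0 z0 p0 q0 y1 z1 p1 q1 ry rz rp rq) <= C * (Rabs ry + Rabs rz + Rabs rp + Rabs rq) + C * n ^ 2 /\
  Rabs (GPf e f n y0 z0 p0 q0 y1 z1 p1 q1 ry rz rp rq) <= C * (Rabs ry + Rabs rz + Rabs rp + Rabs rq) + C * n ^ 2 /\
  Rabs (GQf e f n y0 z0 p0 q0 y1 z1 p1 q1 ry rz rp rq) <= C * (Rabs ry + Rabs rz + Rabs rp + Rabs rq) + C * n ^ 2.
Proof.
  destruct (b_all e f B) as [C [HC H]]. exists C. split; auto. intros.
  destruct (H n y0 z0 p0 q0 y1 z1 p1 q1 ry rz rp rq) as (A1&A2&A3&A4&A5&A6&A7&A8&A9&A10&A11&A12&A13&A14&A15); auto.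
  unfold GZf, GPf, GQf. repeat split; apply b_G1; auto; lra.
Qed.

Lemma dH_py eps eps' y z py pz : derivable_pt_lim (fun q => Ham eps eps' y z q pz) py py.
Proof. unfold Ham. eapply D_eq. dtac. cbv beta. simpl. field. Qed.
Lemma dH_pz eps eps' y z py pz : derivable_pt_lim (fun q => Ham eps eps' y z py q) pz
  (pz * (eps * z + y ^ 2 / 2 + eps' * y ^ 3) ^ 2).
Proof. unfold Ham. eapply D_eq. dtac. cbv beta. simpl. field. Qed.
Lemma dH_y eps eps' y z py pz : derivable_pt_lim (fun q => Ham eps eps' q z py pz) y
  (- (- pz ^ 2 * (eps * z + y ^ 2 / 2 + eps' * y ^ 3) * (y + 3 * eps' * y ^ 2))).
Proof. unfold Ham. eapply D_eq. dtac. cbv beta. simpl. field. Qed.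
Lemma dH_z eps eps' y z py pz : derivable_pt_lim (fun q => Ham eps eps' y q py pz) z
  (- (- pz ^ 2 * (eps * z + y ^ 2 / 2 + eps' * y ^ 3) * eps)).
Proof. unfold Ham. eapply D_eq. dtac. cbv beta. simpl. field. Qed.

Lemma ext_ode eps eps' y z py pz : normal_extremal eps eps' y z py pz ->
  (forall t, derivable_pt_lim y t (py t)) /\
  (forall t, derivable_pt_lim z t (pz t * (eps * z t + y t ^ 2 / 2 + eps' * y t ^ 3) ^ 2)) /\
  (forall t, derivable_pt_lim py t (- pz t ^ 2 * (eps * z t + y t ^ 2 / 2 + eps' * y t ^ 3) * (y t + 3 * eps' * y t ^ 2))) /\
  (forall t, derivable_pt_lim pz t (- pz t ^ 2 * (eps * z t + y t ^ 2 / 2 + eps' * y t ^ 3) * eps)).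
Proof.
  intros H. repeat split; intro t; destruct (H t) as (a&b&c&d&H1&H2&H3&H4&H5&H6&H7&H8).
  - pose proof (uniqueness_limite _ _ _ _ H2 (dH_py _ _ _ _ _ _)). subst; auto.
  - pose proof (uniqueness_limite _ _ _ _ H4 (dH_pz _ _ _ _ _ _)). subst; auto.
  - pose proof (uniqueness_limite _ _ _ _ H6 (dH_y _ _ _ _ _ _)). replace (- pz t ^ 2 * (eps * z t + y t ^ 2 / 2 + eps' * y t ^ 3) * (y t + 3 * eps' * y t ^ 2)) with c by lra. auto.
  - pose proof (uniqueness_limite _ _ _ _ H8 (dH_z _ _ _ _ _ _)). replace (- pz t ^ 2 * (eps * z t + y t ^ 2 / 2 + eps' * y t ^ 3) * eps) with d by lra. auto.
Qed.

Lemma ineq_alg C n ry rz rp rq gz gp gq : 1 <= C ->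
  Rabs gz <= C*(Rabs ry + Rabs rz + Rabs rp + Rabs rq) + C*n^2 ->
  Rabs gp <= C*(Rabs ry + Rabs rz + Rabs rp + Rabs rq) + C*n^2 ->
  Rabs gq <= C*(Rabs ry + Rabs rz + Rabs rp + Rabs rq) + C*n^2 ->
  2*(ry*rp + rz*gz + rp*gp + rq*gq) <= (12*C+1)*(ry^2+rz^2+rp^2+rq^2) + C*n^4.
Proof.
  intros HC Hz Hp Hq.
  set (A := Rabs ry + Rabs rz + Rabs rp + Rabs rq) in *.
  set (G := C * A + C * n^2) in *.
  assert (HA : 0 <= A) by (unfold A; pose proof (Rabs_pos ry); pose proof (Rabs_pos rz); pose proof (Rabs_pos rp); pose proof (Rabs_pos rq); lra).
  assert (Hrp : Rabs rp <= G). { unfold G, A. pose proof (Rabs_pos ry); pose proof (Rabs_pos rz); pose proof (Rabs_pos rp); pose proof (Rabs_pos rq). pose proof (pow2_ge_0 n). nra. }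
  assert (T : forall r g, Rabs g <= G -> r * g <= Rabs r * G).
  { intros r g Hg. eapply Rle_trans. apply Rle_abs. rewrite Rabs_mult. apply Rmult_le_compat_l. apply Rabs_pos. auto. }
  pose proof (T ry rp Hrp). pose proof (T rz gz Hz). pose proof (T rp gp Hp). pose proof (T rq gq Hq).
  assert (S1 : 2*(ry*rp + rz*gz + rp*gp + rq*gq) <= 2 * A * G) by (unfold A; lra).
  assert (HA2 : A^2 <= 4*(ry^2+rz^2+rp^2+rq^2)).
  { unfold A. rewrite <- (pow2_abs ry), <- (pow2_abs rz), <- (pow2_abs rp), <- (pow2_abs rq).
    pose proof (pow2_ge_0 (Rabs ry - Rabs rz)). pose proof (pow2_ge_0 (Rabs ry - Rabs rp)).
    pose proof (pow2_ge_0 (Rabs ry - Rabs rq)). pose proof (pow2_ge_0 (Rabs rz - Rabs rp)).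
    pose proof (pow2_ge_0 (Rabs rz - Rabs rq)). pose proof (pow2_ge_0 (Rabs rp - Rabs rq)). nra. }
  assert (HN2 : 2 * n^2 * A <= A^2 + n^4) by (pose proof (pow2_ge_0 (A - n^2)); nra).
  unfold G in S1.
  assert (2 * A * (C * A + C * n ^ 2) = 2 * C * A^2 + C * (2 * n^2 * A)) by ring.
  assert (0 <= ry^2+rz^2+rp^2+rq^2) by (pose proof (pow2_ge_0 ry); pose proof (pow2_ge_0 rz); pose proof (pow2_ge_0 rp); pose proof (pow2_ge_0 rq); lra).
  nra.
Qed.

Lemma sq_le1 r : r^2 <= 1 -> Rabs r <= 1.
Proof. intros. rewrite <- pow2_abs in H. pose proof (Rabs_pos r). nra. Qed.

Lemma part1 (eps eps' : R) (sigma tau : R) (Htau : tau = 1 \/ tau = -1)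
  (y z py pz : R -> R -> R)
  (Hext : forall lam : R, lam <> 0 ->
     normal_extremal eps eps' (y lam) (z lam) (py lam) (pz lam) /\
     y lam 0 = 0 /\ z lam 0 = 0 /\ py lam 0 = sigma /\ pz lam 0 = lam)
  (Y0 Z0 PY0 PZ0 Y1 Z1 PY1 PZ1 : R -> R)
  (H0 : order0_system Y0 Z0 PY0 PZ0)
  (H0i : Y0 0 = 0 /\ Z0 0 = 0 /\ PY0 0 = sigma /\ PZ0 0 = tau)
  (H1 : order1_system eps eps' Y0 Z0 PY0 PZ0 Y1 Z1 PY1 PZ1)
  (H1i : Y1 0 = 0 /\ Z1 0 = 0 /\ PY1 0 = 0 /\ PZ1 0 = 0) :
  (forall S : R, 0 < S -> forall e : R, 0 < e ->
     exists M : R, forall lam : R, tau * lam > M ->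
       forall s : R, 0 <= s <= S ->
         let eta := / sqrt (Rabs lam) in
         Rabs (y lam (eta * s) - eta * Y0 s - eta ^ 2 * Y1 s) <= e * eta ^ 2 /\
         Rabs (z lam (eta * s) - eta ^ 3 * Z0 s - eta ^ 4 * Z1 s) <= e * eta ^ 4).
Proof.
  intros S HS e He.
  destruct H0i as (I01 & I02 & I03 & I04). destruct H1i as (I11 & I12 & I13 & I14).
  assert (dY0 : forall s, derivable_pt_lim Y0 s (PY0 s)) by (intro; apply H0).
  assert (dPY0 : forall s, derivable_pt_lim PY0 s (- / 2 * (PZ0 s) ^ 2 * (Y0 s) ^ 3)) by (intro; apply H0).
  assert (dZ0 : forall s, derivable_pt_lim Z0 s (/ 4 * PZ0 s * (Y0 s) ^ 4)) by (intro; apply H0).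
  assert (dPZ0 : forall s, derivable_pt_lim PZ0 s 0) by (intro; apply H0).
  assert (dY1 : forall s, derivable_pt_lim Y1 s (PY1 s)) by (intro; apply H1).
  assert (dZ1 : forall s, derivable_pt_lim Z1 s
      (/ 4 * PZ1 s * (Y0 s) ^ 4
       + PZ0 s * ((Y0 s) ^ 3 * Y1 s + eps * Z0 s * (Y0 s) ^ 2 + eps' * (Y0 s) ^ 5))) by (intro; apply H1).
  assert (dPY1 : forall s, derivable_pt_lim PY1 s
      (- PZ0 s * PZ1 s * (Y0 s) ^ 3
       - (PZ0 s) ^ 2 * (3 / 2 * (Y0 s) ^ 2 * Y1 s + eps * Z0 s * Y0 s
                        + 5 / 2 * eps' * (Y0 s) ^ 4))) by (intro; apply H1).
  assert (dPZ1 : forall s, derivable_pt_lim PZ1 s (- / 2 * (PZ0 s) ^ 2 * eps * (Y0 s) ^ 2)) by (intro; apply H1).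
  clear H0 H1.
  assert (HS' : 0 <= S) by lra.
  destruct (cont_bound Y0 0 S HS' (D_cont _ _ dY0)) as [B1 [HB1 HB1']].
  destruct (cont_bound Z0 0 S HS' (D_cont _ _ dZ0)) as [B2 [HB2 HB2']].
  destruct (cont_bound PY0 0 S HS' (D_cont _ _ dPY0)) as [B3 [HB3 HB3']].
  destruct (cont_bound PZ0 0 S HS' (D_cont _ _ dPZ0)) as [B4 [HB4 HB4']].
  destruct (cont_bound Y1 0 S HS' (D_cont _ _ dY1)) as [B5 [HB5 HB5']].
  destruct (cont_bound Z1 0 S HS' (D_cont _ _ dZ1)) as [B6 [HB6 HB6']].
  destruct (cont_bound PY1 0 S HS' (D_cont _ _ dPY1)) as [B7 [HB7 HB7']].
  destruct (cont_bound PZ1 0 S HS' (D_cont _ _ dPZ1)) as [B8 [HB8 HB8']].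
  set (B := 1 + B1 + B2 + B3 + B4 + B5 + B6 + B7 + B8).
  assert (HB : forall s, 0 <= s <= S ->
     Rabs (Y0 s) <= B /\ Rabs (Z0 s) <= B /\ Rabs (PY0 s) <= B /\ Rabs (PZ0 s) <= B /\
     Rabs (Y1 s) <= B /\ Rabs (Z1 s) <= B /\ Rabs (PY1 s) <= B /\ Rabs (PZ1 s) <= B).
  { intros s Hs. specialize (HB1' s Hs). specialize (HB2' s Hs). specialize (HB3' s Hs). specialize (HB4' s Hs).
    specialize (HB5' s Hs). specialize (HB6' s Hs). specialize (HB7' s Hs). specialize (HB8' s Hs).
    unfold B. repeat split; lra. }
  destruct (b_G eps eps' B) as [C [HC1 HC]].
  set (a := 12 * C + 1).
  assert (Ha : 0 < a) by (unfold a; lra).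
  set (K := C / a * exp (a * S)).
  assert (HK : 0 < K).
  { unfold K. apply Rmult_lt_0_compat. unfold Rdiv. apply Rmult_lt_0_compat. lra. apply Rinv_0_lt_compat; lra. apply exp_pos. }
  set (eta0 := Rmin 1 (Rmin (/ (2 * K + 2)) (e / (K + 1)))).
  assert (Heta0 : 0 < eta0 /\ eta0 <= 1 /\ eta0 <= / (2 * K + 2) /\ eta0 <= e / (K + 1)).
  { unfold eta0. repeat split.
    - apply Rmin_pos. lra. apply Rmin_pos. apply Rinv_0_lt_compat; lra. unfold Rdiv; apply Rmult_lt_0_compat; [lra|apply Rinv_0_lt_compat; lra].
    - apply Rmin_l.
    - eapply Rle_trans. apply Rmin_r. apply Rmin_l.
    - eapply Rle_trans. apply Rmin_r. apply Rmin_r. }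
  destruct Heta0 as (He0 & He1 & He2 & He3).
  exists (/ eta0 ^ 2). intros lam Hlam s Hs eta.
  assert (Hpos : 0 < / eta0 ^ 2) by (apply Rinv_0_lt_compat; apply pow_lt; lra).
  assert (Habs : / eta0 ^ 2 < Rabs lam).
  { assert (tau * lam <= Rabs lam). { destruct Htau; subst tau. rewrite Rmult_1_l. apply Rle_abs.
      replace (-1 * lam) with (- lam) by ring. rewrite <- Rabs_Ropp. apply Rle_abs. } lra. }
  assert (Hl0 : lam <> 0). { intro H. subst. rewrite Rabs_R0 in Habs. lra. }
  assert (Hla : 0 < Rabs lam) by lra.
  assert (Hsq : 0 < sqrt (Rabs lam)) by (apply sqrt_lt_R0; lra).
  assert (Heta : 0 < eta) by (apply Rinv_0_lt_compat; auto).
  assert (Heta2 : eta ^ 2 = / Rabs lam).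
  { unfold eta. rewrite pow_inv. f_equal. simpl. rewrite Rmult_1_r. apply sqrt_sqrt. lra. }
  assert (Hetalt : eta < eta0).
  { assert (eta ^ 2 < eta0 ^ 2).
    { rewrite Heta2. rewrite <- (Rinv_inv (eta0 ^ 2)). apply Rinv_lt_contravar. nra. auto. }
    destruct (Rlt_le_dec eta eta0); auto. assert (eta0 ^ 2 <= eta ^ 2) by (apply pow_incr; lra). lra. }
  assert (Hlt : eta ^ 2 * lam = tau).
  { rewrite Heta2. destruct Htau; subst tau.
    - assert (0 < lam) by lra. rewrite Rabs_right by lra. field. lra.
    - assert (lam < 0) by lra. rewrite Rabs_left by lra. field. lra. }
  destruct (Hext lam Hl0) as [Hne [Iy [Iz [Ipy Ipz]]]].
  destruct (ext_ode _ _ _ _ _ _ Hne) as [dy [dz [dpy dpz]]].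
  clear Hext Hne.
  set (RY := fun t => y lam (eta * t) * / eta - Y0 t - eta * Y1 t).
  set (RZ := fun t => z lam (eta * t) * / eta ^ 3 - Z0 t - eta * Z1 t).
  set (RP := fun t => py lam (eta * t) - PY0 t - eta * PY1 t).
  set (RQ := fun t => eta ^ 2 * pz lam (eta * t) - PZ0 t - eta * PZ1 t).
  assert (dRY : forall t, derivable_pt_lim RY t (RP t)).
  { intro t. unfold RY, RP. eapply D_eq. dtac. cbv beta. field. lra. }
  assert (dRZ : forall t, derivable_pt_lim RZ t (GZf eps eps' eta (Y0 t) (Z0 t) (PY0 t) (PZ0 t) (Y1 t) (Z1 t) (PY1 t) (PZ1 t) (RY t) (RZ t) (RP t) (RQ t))).
  { intro t. unfold RZ at 1. eapply D_eq. dtac. cbv beta. rewrite idZ. unfold RY, RZ, RP, RQ. field. lra. }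
  assert (dRP : forall t, derivable_pt_lim RP t (GPf eps eps' eta (Y0 t) (Z0 t) (PY0 t) (PZ0 t) (Y1 t) (Z1 t) (PY1 t) (PZ1 t) (RY t) (RZ t) (RP t) (RQ t))).
  { intro t. unfold RP at 1. eapply D_eq. dtac. cbv beta. rewrite idP. unfold RY, RZ, RP, RQ. field. lra. }
  assert (dRQ : forall t, derivable_pt_lim RQ t (GQf eps eps' eta (Y0 t) (Z0 t) (PY0 t) (PZ0 t) (Y1 t) (Z1 t) (PY1 t) (PZ1 t) (RY t) (RZ t) (RP t) (RQ t))).
  { intro t. unfold RQ at 1. eapply D_eq. dtac. cbv beta. rewrite idQ. unfold RY, RZ, RP, RQ. field. lra. }
  set (E := fun t => RY t ^ 2 + RZ t ^ 2 + RP t ^ 2 + RQ t ^ 2).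
  set (E' := fun t => 2 * (RY t * RP t
     + RZ t * GZf eps eps' eta (Y0 t) (Z0 t) (PY0 t) (PZ0 t) (Y1 t) (Z1 t) (PY1 t) (PZ1 t) (RY t) (RZ t) (RP t) (RQ t)
     + RP t * GPf eps eps' eta (Y0 t) (Z0 t) (PY0 t) (PZ0 t) (Y1 t) (Z1 t) (PY1 t) (PZ1 t) (RY t) (RZ t) (RP t) (RQ t)
     + RQ t * GQf eps eps' eta (Y0 t) (Z0 t) (PY0 t) (PZ0 t) (Y1 t) (Z1 t) (PY1 t) (PZ1 t) (RY t) (RZ t) (RP t) (RQ t))).
  assert (dE : forall t, derivable_pt_lim E t (E' t)).
  { intro t. unfold E, E'. eapply D_eq. dtac. cbv beta. simpl. ring. }
  assert (Heta1 : Rabs eta <= 1) by (rewrite Rabs_right; lra).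
  assert (HI : forall t, 0 <= t <= S -> E t <= 1 -> E' t <= a * E t + C * eta ^ 4).
  { intros t Ht HE1.
    assert (E1 : RY t ^ 2 <= 1 /\ RZ t ^ 2 <= 1 /\ RP t ^ 2 <= 1 /\ RQ t ^ 2 <= 1).
    { unfold E in HE1. pose proof (pow2_ge_0 (RY t)). pose proof (pow2_ge_0 (RZ t)).
      pose proof (pow2_ge_0 (RP t)). pose proof (pow2_ge_0 (RQ t)). repeat split; lra. }
    destruct E1 as (E1 & E2 & E3 & E4).
    destruct (HB t Ht) as (A1 & A2 & A3 & A4 & A5 & A6 & A7 & A8).
    destruct (HC eta (Y0 t) (Z0 t) (PY0 t) (PZ0 t) (Y1 t) (Z1 t) (PY1 t) (PZ1 t) (RY t) (RZ t) (RP t) (RQ t))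
      as (G1 & G2 & G3); auto using sq_le1.
    unfold E', E, a. apply ineq_alg; auto. }
  assert (HE0 : E 0 = 0).
  { unfold E, RY, RZ, RP, RQ. rewrite !Rmult_0_r, Iy, Iz, Ipy, Ipz, I01, I02, I03, I04, I11, I12, I13, I14, Hlt. ring. }
  assert (HKe : K * eta ^ 4 <= K * eta).
  { apply Rmult_le_compat_l. lra. assert (eta ^ 4 = eta * eta ^ 3) by ring. rewrite H.
    assert (eta ^ 3 <= 1) by (rewrite <- (pow1 3); apply pow_incr; lra). nra. }
  assert (HKe2 : K * eta < / 2).
  { assert (K * eta <= K * / (2 * K + 2)) by (apply Rmult_le_compat_l; lra).
    assert (K * / (2 * K + 2) < / 2). { apply (Rmult_lt_reg_r (2 * K + 2)). lra. field_simplify; lra. }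
    lra. }
  assert (HG : forall t, 0 <= t <= S -> (forall u, 0 <= u <= t -> E u <= 1) -> E t <= K * eta ^ 4).
  { intros t Ht Hu.
    assert (Hb : 0 <= C * eta ^ 4) by (apply Rmult_le_pos; [lra|apply pow_le; lra]).
    pose proof (gronwall E E' a (C * eta ^ 4) t Ha Hb (proj1 Ht) dE) as Hg.
    assert (Hg2 : E t <= (E 0 + C * eta ^ 4 / a) * exp (a * t)).
    { apply Hg. intros u Hu2. apply HI. lra. apply Hu. auto. }
    rewrite HE0, Rplus_0_l in Hg2. eapply Rle_trans. apply Hg2.
    unfold K. assert (exp (a * t) <= exp (a * S)).
    { destruct (Req_dec t S). subst; lra. left. apply exp_increasing. nra. }
    assert (0 <= C * eta ^ 4 / a) by (unfold Rdiv; apply Rmult_le_pos; [auto| left; apply Rinv_0_lt_compat; lra]).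
    replace (C / a * exp (a * S) * eta ^ 4) with (C * eta ^ 4 / a * exp (a * S)) by (field; lra).
    apply Rmult_le_compat_l; auto. }
  assert (Hboot : forall t, 0 <= t <= S -> E t < 1).
  { apply bootstrap. apply (D_cont _ _ dE). auto. lra.
    intros t Ht Hu. specialize (HG t Ht Hu). lra. }
  assert (HEs : E s <= K * eta ^ 4).
  { apply HG. auto. intros u Hu. left. apply Hboot. lra. }
  assert (HKe3 : K * eta ^ 2 <= e ^ 2).
  { assert (eta ^ 2 <= (e / (K + 1)) ^ 2) by (apply pow_incr; lra).
    assert (K * (e / (K + 1)) ^ 2 <= e ^ 2).
    { replace (K * (e / (K + 1)) ^ 2) with (e ^ 2 * (K / (K + 1) ^ 2)) by (field; lra).
      assert (K / (K + 1) ^ 2 <= 1). { apply (Rmult_le_reg_r ((K + 1) ^ 2)). nra. field_simplify; nra. }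
      pose proof (pow2_ge_0 e). nra. }
    nra. }
  assert (Hsmall : forall r, r ^ 2 <= E s -> Rabs r <= e * eta).
  { intros r Hr. assert (r ^ 2 <= (e * eta) ^ 2).
    { eapply Rle_trans. apply Hr. eapply Rle_trans. apply HEs.
      replace ((e * eta) ^ 2) with (e ^ 2 * eta ^ 2) by ring.
      replace (K * eta ^ 4) with ((K * eta ^ 2) * eta ^ 2) by ring.
      apply Rmult_le_compat_r. apply pow2_ge_0. auto. }
    rewrite <- pow2_abs in H. assert (0 <= e * eta) by nra. pose proof (Rabs_pos r). nra. }
  split.
  - replace (y lam (eta * s) - eta * Y0 s - eta ^ 2 * Y1 s) with (eta * RY s) by (unfold RY; field; lra).
    rewrite Rabs_mult, (Rabs_right eta) by lra.
    assert (Rabs (RY s) <= e * eta).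
    { apply Hsmall. unfold E. pose proof (pow2_ge_0 (RZ s)). pose proof (pow2_ge_0 (RP s)). pose proof (pow2_ge_0 (RQ s)). lra. }
    replace (e * eta ^ 2) with (eta * (e * eta)) by ring. apply Rmult_le_compat_l; lra.
  - replace (z lam (eta * s) - eta ^ 3 * Z0 s - eta ^ 4 * Z1 s) with (eta ^ 3 * RZ s) by (unfold RZ; field; lra).
    rewrite Rabs_mult, (Rabs_right (eta ^ 3)) by (apply Rle_ge; apply pow_le; lra).
    assert (Rabs (RZ s) <= e * eta).
    { apply Hsmall. unfold E. pose proof (pow2_ge_0 (RY s)). pose proof (pow2_ge_0 (RP s)). pose proof (pow2_ge_0 (RQ s)). lra. }
    replace (e * eta ^ 4) with (eta ^ 3 * (e * eta)) by ring. apply Rmult_le_compat_l. apply pow_le; lra. auto.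
Qed.

Theorem proposition4 (eps eps' : R) (Heps : eps <> 0)
  (sigma tau : R) (Hsigma : sigma = 1 \/ sigma = -1) (Htau : tau = 1 \/ tau = -1)
  (y z py pz : R -> R -> R)
  (Hext : forall lam : R, lam <> 0 ->
     normal_extremal eps eps' (y lam) (z lam) (py lam) (pz lam) /\
     y lam 0 = 0 /\ z lam 0 = 0 /\ py lam 0 = sigma /\ pz lam 0 = lam)
  (Y0 Z0 PY0 PZ0 Y1 Z1 PY1 PZ1 : R -> R)
  (H0 : order0_system Y0 Z0 PY0 PZ0)
  (H0i : Y0 0 = 0 /\ Z0 0 = 0 /\ PY0 0 = sigma /\ PZ0 0 = tau)
  (H1 : order1_system eps eps' Y0 Z0 PY0 PZ0 Y1 Z1 PY1 PZ1)
  (H1i : Y1 0 = 0 /\ Z1 0 = 0 /\ PY1 0 = 0 /\ PZ1 0 = 0) :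
  (forall S : R, 0 < S -> forall e : R, 0 < e ->
     exists M : R, forall lam : R, tau * lam > M ->
       forall s : R, 0 <= s <= S ->
         let eta := / sqrt (Rabs lam) in
         Rabs (y lam (eta * s) - eta * Y0 s - eta ^ 2 * Y1 s) <= e * eta ^ 2 /\
         Rabs (z lam (eta * s) - eta ^ 3 * Z0 s - eta ^ 4 * Z1 s) <= e * eta ^ 4)
  /\
  (forall s : R,
     Y0 s = - PY0 0 * sqrt 2 * cn (K + s) /\
     Z0 s = PZ0 s / 3 * (s + 2 * sn (K + s) * cn (K + s) * dn (K + s))).
Proof.
  split.
  - exact (part1 eps eps' sigma tau Htau y z py pz Hext Y0 Z0 PY0 PZ0 Y1 Z1 PY1 PZ1 H0 H0i H1 H1i).
  - exact (closed_form sigma tau Hsigma Htau Y0 Z0 PY0 PZ0 H0 H0i).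
Qed.
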